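(* Let $n=2$, $c\equiv1$ and $u_0(x)=-|x|$. For $\varepsilon>0$ let $u^\varepsilon$ be the unique viscosity solution of $$u^\varepsilon_t-\varepsilon\,\mathrm{tr}\{(I_2-\widehat{Du^\varepsilon}\otimes\widehat{Du^\varepsilon})D^2u^\varepsilon\}-|Du^\varepsilon|=0\ \text{in }\mathbb{R}^2\times(0,\infty),\qquad u^\varepsilon(\cdot,0)=u_0,$$ (i.e. $u^\varepsilon_t+F(\varepsilon D^2u^\varepsilon,Du^\varepsilon,x/\varepsilon)=0$ with $F(X,p,y)=-\mathrm{tr}\{(I_2-\hat p\otimes\hat p)X\}-c(y)|p|$), and let $u$ be the unique viscosity solution of the effective problem $u_t+\overline{F}(Du/|Du|)|Du|=0$ in $\mathbb{R}^2\times(0,\infty)$, $u(\cdot,0)=u_0$. Then for any $\varepsilon>0$ and any $(x,t)\in\mathbb{R}^2\times[0,\infty)$ with $|x|=t>\varepsilon(1+e^{-1})$, $$|u^\varepsilon(x,t)-u(x,t)|\geq\frac12\varepsilon\Big(\log\Big(\frac{t}{\varepsilon}-1\Big)+1\Big).$$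
   Context: $\hat p=p/|p|$ for $p\neq0$. For each $p\in\mathbb{R}^2$, $\overline{F}(p)$ denotes the unique real number such that $F(D^2v,p+Dv,y)=\overline{F}(p)$ admits a $\mathbb{Z}^2$-periodic viscosity solution (for $c\equiv1$ this gives $\overline{F}(p)=-|p|$). Solutions are viscosity solutions in the sense appropriate for geometric equations. *)

(* Defs.v *)
From Stdlib Require Import Reals.
Open Scope R_scope.

Definition pt := (R * R)%type.
Definition dot (p q : pt) : R := fst p * fst q + snd p * snd q.
Definition nrm (p : pt) : R := sqrt (dot p p).
Definition psub (p q : pt) : pt := (fst p - fst q, snd p - snd q).
Definition pscale (k : R) (p : pt) : pt := (k * fst p, k * snd p).

(* symmetric 2x2 matrices [[s11, s12], [s12, s22]] *)
Record sym2 := Sym2 { s11 : R; s12 : R; s22 : R }.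
Definition mxv (X : sym2) (v : pt) : pt :=
  (s11 X * fst v + s12 X * snd v, s12 X * fst v + s22 X * snd v).
(* tr(A X) for symmetric A, X *)
Definition trprod (A X : sym2) : R :=
  s11 A * s11 X + 2 * s12 A * s12 X + s22 A * s22 X.
Definition sym_dist (X Y : sym2) : R :=
  Rabs (s11 X - s11 Y) + Rabs (s12 X - s12 Y) + Rabs (s22 X - s22 Y).
Definition sscale (k : R) (X : sym2) : sym2 :=
  Sym2 (k * s11 X) (k * s12 X) (k * s22 X).

(* \hat p = p / |p| (only used for p <> 0) *)
Definition hat (p : pt) : pt := pscale (/ nrm p) p.
(* I_2 - \hat p (x) \hat p *)
Definition projm (p : pt) : sym2 :=
  let q := hat p in
  Sym2 (1 - fst q * fst q) (- (fst q * snd q)) (1 - snd q * snd q).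

Definition c (y : pt) : R := 1.
Definition F (X : sym2) (p : pt) (y : pt) : R :=
  - trprod (projm p) X - c y * nrm p.

(* Operator of the eps-problem: u_t + F(eps D^2u, Du, x/eps) = 0 *)
Definition Geps (eps : R) (x : pt) (X : sym2) (p : pt) : R :=
  F (sscale eps X) p (pscale (/ eps) x).

(* Effective Hamiltonian; for c == 1 the context gives Fbar(p) = -|p| *)
Definition Fbar (p : pt) : R := - nrm p.
(* Operator of the effective problem: u_t + Fbar(Du/|Du|)|Du| = 0 *)
Definition Geff (x : pt) (X : sym2) (p : pt) : R := Fbar (hat p) * nrm p.

Definition u0 (x : pt) : R := - nrm x.

Definition superjet (u : pt -> R -> R) (x : pt) (t a : R) (p : pt) (X : sym2) : Prop :=
  forall eta, eta > 0 -> exists delta, delta > 0 /\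
    forall y s, s > 0 -> nrm (psub y x) < delta -> Rabs (s - t) < delta ->
      u y s <= u x t + a * (s - t) + dot p (psub y x)
               + / 2 * dot (mxv X (psub y x)) (psub y x)
               + eta * (Rabs (s - t) + nrm (psub y x) ^ 2).
Definition subjet (u : pt -> R -> R) (x : pt) (t a : R) (p : pt) (X : sym2) : Prop :=
  forall eta, eta > 0 -> exists delta, delta > 0 /\
    forall y s, s > 0 -> nrm (psub y x) < delta -> Rabs (s - t) < delta ->
      u y s >= u x t + a * (s - t) + dot p (psub y x)
               + / 2 * dot (mxv X (psub y x)) (psub y x)
               - eta * (Rabs (s - t) + nrm (psub y x) ^ 2).

(* G_*(x,X,p) <= r, where G_* is the lower semicontinuous envelope in (X,p)
   of G (which is only defined for p <> 0): liminf_{(Y,q)->(X,p), q<>0} G <= r *)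
Definition lower_env_le (G : pt -> sym2 -> pt -> R) (x : pt) (X : sym2) (p : pt) (r : R) : Prop :=
  forall eta delta, eta > 0 -> delta > 0 -> exists Y q,
    q <> (0, 0) /\ sym_dist Y X + nrm (psub q p) < delta /\ G x Y q <= r + eta.
(* G^*(x,X,p) >= r, upper semicontinuous envelope *)
Definition upper_env_ge (G : pt -> sym2 -> pt -> R) (x : pt) (X : sym2) (p : pt) (r : R) : Prop :=
  forall eta delta, eta > 0 -> delta > 0 -> exists Y q,
    q <> (0, 0) /\ sym_dist Y X + nrm (psub q p) < delta /\ G x Y q >= r - eta.

(* uniqueness class: uniformly continuous on R^2 x [0,T] for every T *)
Definition unif_cont_strips (u : pt -> R -> R) : Prop :=
  forall T, T > 0 -> forall eta, eta > 0 -> exists delta, delta > 0 /\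
    forall x y t s, 0 <= t <= T -> 0 <= s <= T ->
      nrm (psub x y) < delta -> Rabs (t - s) < delta ->
      Rabs (u x t - u y s) < eta.

(* u is a viscosity solution of u_t + G(x, D^2u, Du) = 0 in R^2 x (0,oo),
   u(.,0) = v0, in the sense for (geometric, singular at Du = 0) equations
   via semicontinuous envelopes. *)
Definition visc_sol (G : pt -> sym2 -> pt -> R) (v0 : pt -> R) (u : pt -> R -> R) : Prop :=
  unif_cont_strips u /\
  (forall x, u x 0 = v0 x) /\
  (forall x t, t > 0 ->
     (forall a p X, superjet u x t a p X -> lower_env_le G x X p (- a)) /\
     (forall a p X, subjet u x t a p X -> upper_env_ge G x X p (- a))).

(* Main.v *)
Require Import Defs.
From Stdlib Require Import Reals Lra Psatz ZArith ClassicalEpsilon.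
From Coquelicot Require Import Coquelicot.
Open Scope R_scope.

Definition clamp (a b x : R) := Rmax a (Rmin x b).

Lemma clamp_in a b x : a <= b -> a <= clamp a b x <= b.
Proof. intros; unfold clamp, Rmax, Rmin; repeat destruct Rle_dec; lra. Qed.
Lemma clamp_id a b x : a <= x <= b -> clamp a b x = x.
Proof. intros; unfold clamp, Rmax, Rmin; repeat destruct Rle_dec; lra. Qed.
Lemma clamp_lip a b x y : a <= b -> Rabs (clamp a b x - clamp a b y) <= Rabs (x - y).
Proof. intros; unfold clamp, Rmax, Rmin; repeat destruct Rle_dec;
  unfold Rabs; repeat destruct Rcase_abs; lra. Qed.

Lemma evt1 (g : R -> R) a b : a <= b ->
  (forall eta, eta > 0 -> exists d, d > 0 /\ forall x y, a <= x <= b -> a <= y <= b ->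
     Rabs (x - y) < d -> Rabs (g x - g y) < eta) ->
  exists m, a <= m <= b /\ forall x, a <= x <= b -> g x <= g m.
Proof.
  intros Hab Hu.
  destruct (continuity_ab_maj (fun x => g (clamp a b x)) a b Hab) as [m [Hm2 Hm1]].
  - intros c _. unfold continuity_pt, continue_in, limit1_in, limit_in; simpl; unfold R_dist.
    intros eps Heps. destruct (Hu eps Heps) as [d [Hd Hd']].
    exists d; split; [lra|]. intros x [_ Hx]. apply Hd'; try apply clamp_in; auto.
    eapply Rle_lt_trans; [apply clamp_lip; auto| exact Hx].
  - exists m; split; auto. intros x Hx. specialize (Hm2 x Hx).
    rewrite clamp_id in Hm2 by auto. rewrite clamp_id in Hm2 by auto. exact Hm2.
Qed.

Lemma evt2 (g : R -> R -> R) a1 b1 a2 b2 : a1 <= b1 -> a2 <= b2 ->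
  (forall eta, eta > 0 -> exists d, d > 0 /\ forall x y x' y', a1 <= x <= b1 -> a2 <= y <= b2 ->
     a1 <= x' <= b1 -> a2 <= y' <= b2 ->
     Rabs (x - x') < d -> Rabs (y - y') < d -> Rabs (g x y - g x' y') < eta) ->
  exists m1 m2, a1 <= m1 <= b1 /\ a2 <= m2 <= b2 /\
    forall x y, a1 <= x <= b1 -> a2 <= y <= b2 -> g x y <= g m1 m2.
Proof.
  intros H1 H2 Hu.
  assert (HY : forall x, { y | a2 <= y <= b2 /\ forall y', a2 <= y' <= b2 -> g (clamp a1 b1 x) y' <= g (clamp a1 b1 x) y }).
  { intro x. apply constructive_indefinite_description.
    apply evt1; auto. intros eta Heta. destruct (Hu eta Heta) as [d [Hd Hd']].
    exists d; split; auto. intros; apply Hd'; auto; try apply clamp_in; auto.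
    rewrite Rminus_diag, Rabs_R0; lra. }
  set (Y := fun x => proj1_sig (HY x)).
  assert (HYs : forall x, a2 <= Y x <= b2 /\ forall y', a2 <= y' <= b2 -> g (clamp a1 b1 x) y' <= g (clamp a1 b1 x) (Y x)).
  { intro x; unfold Y; destruct (HY x); simpl; auto. }
  destruct (evt1 (fun x => g (clamp a1 b1 x) (Y x)) a1 b1 H1) as [m [Hm Hm']].
  - intros eta Heta. destruct (Hu (eta/2)) as [d [Hd Hd']]; [lra|].
    exists d; split; auto. intros x x' Hx Hx' Hxx.
    destruct (HYs x) as [Ha Hb]; destruct (HYs x') as [Ha' Hb'].
    rewrite !clamp_id in * by auto.
    assert (A1 := Hd' x (Y x') x' (Y x') Hx Ha' Hx' Ha' Hxx).
    assert (A2 := Hd' x' (Y x) x (Y x) Hx' Ha Hx Ha).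
    rewrite Rminus_diag, Rabs_R0 in A1, A2.
    specialize (A1 Hd). rewrite Rabs_minus_sym in A2. specialize (A2 Hxx Hd).
    specialize (Hb (Y x') Ha'). specialize (Hb' (Y x) Ha).
    try rewrite !clamp_id in Hb, Hb' by auto.
    revert A1 A2; unfold Rabs; repeat destruct Rcase_abs; intros; lra.
  - exists m, (Y m). destruct (HYs m) as [Ha Hb]. split; auto. split; auto.
    intros x y Hx Hy. specialize (Hm' x Hx). destruct (HYs x) as [_ Hb'].
    specialize (Hb' y Hy). rewrite !clamp_id in * by auto. lra.
Qed.

Lemma evt3 (g : R -> R -> R -> R) a1 b1 a2 b2 a3 b3 : a1 <= b1 -> a2 <= b2 -> a3 <= b3 ->
  (forall eta, eta > 0 -> exists d, d > 0 /\ forall x y z x' y' z', a1 <= x <= b1 -> a2 <= y <= b2 ->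
     a3 <= z <= b3 -> a1 <= x' <= b1 -> a2 <= y' <= b2 -> a3 <= z' <= b3 ->
     Rabs (x - x') < d -> Rabs (y - y') < d -> Rabs (z - z') < d -> Rabs (g x y z - g x' y' z') < eta) ->
  exists m1 m2 m3, a1 <= m1 <= b1 /\ a2 <= m2 <= b2 /\ a3 <= m3 <= b3 /\
    forall x y z, a1 <= x <= b1 -> a2 <= y <= b2 -> a3 <= z <= b3 -> g x y z <= g m1 m2 m3.
Proof.
  intros H1 H2 H3 Hu.
  assert (HY : forall x, { p : R * R | (a2 <= fst p <= b2 /\ a3 <= snd p <= b3) /\ forall y' z', a2 <= y' <= b2 -> a3 <= z' <= b3 -> g (clamp a1 b1 x) y' z' <= g (clamp a1 b1 x) (fst p) (snd p) }).
  { intro x. apply constructive_indefinite_description.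
    destruct (evt2 (g (clamp a1 b1 x)) a2 b2 a3 b3 H2 H3) as [m2 [m3 [? [? ?]]]].
    - intros eta Heta. destruct (Hu eta Heta) as [d [Hd Hd']].
      exists d; split; auto. intros; apply Hd'; auto; try apply clamp_in; auto.
      rewrite Rminus_diag, Rabs_R0; lra.
    - exists (m2, m3); simpl; auto. }
  set (Y := fun x => fst (proj1_sig (HY x))).
  set (Z := fun x => snd (proj1_sig (HY x))).
  assert (HYs : forall x, (a2 <= Y x <= b2 /\ a3 <= Z x <= b3) /\ forall y' z', a2 <= y' <= b2 -> a3 <= z' <= b3 -> g (clamp a1 b1 x) y' z' <= g (clamp a1 b1 x) (Y x) (Z x)).
  { intro x; unfold Y, Z; destruct (HY x); simpl; auto. }
  destruct (evt1 (fun x => g (clamp a1 b1 x) (Y x) (Z x)) a1 b1 H1) as [m [Hm Hm']].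
  - intros eta Heta. destruct (Hu (eta/2)) as [d [Hd Hd']]; [lra|].
    exists d; split; auto. intros x x' Hx Hx' Hxx.
    destruct (HYs x) as [[Ha Hc] Hb]; destruct (HYs x') as [[Ha' Hc'] Hb'].
    rewrite !clamp_id in * by auto.
    assert (A1 := Hd' x (Y x') (Z x') x' (Y x') (Z x') Hx Ha' Hc' Hx' Ha' Hc' Hxx).
    assert (A2 := Hd' x' (Y x) (Z x) x (Y x) (Z x) Hx' Ha Hc Hx Ha Hc).
    repeat rewrite Rminus_diag in A1, A2. rewrite Rabs_R0 in A1, A2.
    specialize (A1 Hd Hd). rewrite Rabs_minus_sym in A2. specialize (A2 Hxx Hd Hd).
    specialize (Hb (Y x') (Z x') Ha' Hc'). specialize (Hb' (Y x) (Z x) Ha Hc).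
    try rewrite !clamp_id in Hb, Hb' by auto.
    revert A1 A2; unfold Rabs; repeat destruct Rcase_abs; intros; lra.
  - exists m, (Y m), (Z m). destruct (HYs m) as [[Ha Hc] Hb]. repeat split; try lra.
    intros x y z Hx Hy Hz. specialize (Hm' x Hx). destruct (HYs x) as [_ Hb'].
    specialize (Hb' y z Hy Hz). rewrite !clamp_id in * by auto. lra.
Qed.

Lemma dot_ge0 p : 0 <= dot p p.
Proof. unfold dot; nra. Qed.
Lemma nrm_ge0 p : 0 <= nrm p.
Proof. unfold nrm; apply sqrt_pos. Qed.
Lemma nrm_sq p : nrm p * nrm p = dot p p.
Proof. unfold nrm; apply sqrt_sqrt, dot_ge0. Qed.
Lemma sqrt_le_sq a b : 0 <= b -> 0 <= a -> a <= b * b -> sqrt a <= b.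
Proof. intros. rewrite <- (sqrt_square b) by auto. apply sqrt_le_1_alt; auto. Qed.
Lemma le_nrm_of a p : 0 <= a -> a * a <= dot p p -> a <= nrm p.
Proof. intros. unfold nrm. rewrite <- (sqrt_square a) by auto. apply sqrt_le_1_alt; auto. Qed.
Lemma nrm_le_of a p : 0 <= a -> dot p p <= a * a -> nrm p <= a.
Proof. intros. apply sqrt_le_sq; auto using dot_ge0. Qed.
Lemma fst_le_nrm p : Rabs (fst p) <= nrm p.
Proof. apply le_nrm_of; [apply Rabs_pos|]. rewrite <- Rabs_mult, Rabs_right by nra.
  unfold dot; nra. Qed.
Lemma snd_le_nrm p : Rabs (snd p) <= nrm p.
Proof. apply le_nrm_of; [apply Rabs_pos|]. rewrite <- Rabs_mult, Rabs_right by nra.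
  unfold dot; nra. Qed.
Lemma nrm_le_abs p : nrm p <= Rabs (fst p) + Rabs (snd p).
Proof. apply nrm_le_of. pose proof (Rabs_pos (fst p)); pose proof (Rabs_pos (snd p)); lra.
  unfold dot. destruct p as [a b]; simpl.
  pose proof (Rabs_pos a); pose proof (Rabs_pos b).
  assert (Rabs a * Rabs a = a * a) by (rewrite <- Rabs_mult; apply Rabs_right; nra).
  assert (Rabs b * Rabs b = b * b) by (rewrite <- Rabs_mult; apply Rabs_right; nra).
  nra. Qed.
Lemma cs p q : Rabs (dot p q) <= nrm p * nrm q.
Proof.
  assert (H : dot p q * dot p q <= dot p p * dot q q) by (destruct p as [a b], q as [c0 d]; unfold dot; simpl; pose proof (Rle_0_sqr (a*d-b*c0)); unfold Rsqr in *; nra).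
  pose proof (nrm_sq p); pose proof (nrm_sq q); pose proof (nrm_ge0 p); pose proof (nrm_ge0 q).
  rewrite <- (Rabs_right (nrm p * nrm q)) by nra.
  apply Rsqr_le_abs_0. unfold Rsqr. nra. Qed.
Lemma cs1 p q : dot p q <= nrm p * nrm q.
Proof. pose proof (cs p q). pose proof (Rle_abs (dot p q)). lra. Qed.
Lemma nrm_tri_le y z : nrm y <= nrm z + nrm (psub y z).
Proof.
  pose proof (nrm_ge0 z); pose proof (nrm_ge0 (psub y z)).
  apply nrm_le_of; [lra|].
  pose proof (cs1 z (psub y z)). pose proof (nrm_sq z); pose proof (nrm_sq (psub y z)).
  assert (dot y y = dot z z + 2 * dot z (psub y z) + dot (psub y z) (psub y z)).
  { destruct y, z; unfold dot, psub; simpl; ring. }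
  nra. Qed.
Lemma psub_sym y z : nrm (psub y z) = nrm (psub z y).
Proof. destruct y, z; unfold nrm, dot, psub; simpl. f_equal; ring. Qed.
Lemma nrm_lip y z : Rabs (nrm y - nrm z) <= nrm (psub y z).
Proof.
  pose proof (nrm_tri_le y z); pose proof (nrm_tri_le z y). rewrite psub_sym in H0.
  unfold Rabs; destruct Rcase_abs; lra. Qed.
Lemma sqrt_concave A B : 0 < A -> 0 <= A + B -> sqrt (A + B) <= sqrt A + B / (2 * sqrt A).
Proof.
  intros H H0. pose proof (sqrt_lt_R0 A H) as H2. pose proof (sqrt_sqrt A (Rlt_le _ _ H)) as H1.
  assert (E : sqrt A + B / (2 * sqrt A) = (2 * A + B) / (2 * sqrt A)) by (set (s := sqrt A) in *; rewrite <- H1; field; lra).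
  apply sqrt_le_sq; [rewrite E; apply Rmult_le_pos; [lra| left; apply Rinv_0_lt_compat; lra] | lra |].
  assert (E2 : (sqrt A + B / (2 * sqrt A)) * (sqrt A + B / (2 * sqrt A)) = A + B + B*B/(4*A)).
  { set (s := sqrt A) in *. rewrite <- H1. field. lra. }
  rewrite E2. assert (0 <= B*B/(4*A)) by (apply Rmult_le_pos; [nra| left; apply Rinv_0_lt_compat; lra]). lra.
Qed.
Lemma nrm_eq0 p : nrm p = 0 -> p = (0, 0).
Proof. intros H. pose proof (nrm_sq p). rewrite H in H0. destruct p as [a b]; unfold dot in H0; simpl in H0.
  assert (a = 0) by nra. assert (b = 0) by nra. subst; auto. Qed.

Lemma growth v : unif_cont_strips v -> forall T, T > 0 -> exists C, C >= 0 /\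
  forall z s, 0 <= s <= T -> Rabs (v z s - v z 0) <= C.
Proof.
  intros Hv T HT. destruct (Hv T HT 1 Rlt_0_1) as [d [Hd Hd']].
  assert (Hind : forall n z s, 0 <= s <= T -> s <= INR n * (d/2) -> Rabs (v z s - v z 0) <= INR n).
  { induction n; intros z s Hs Hsn.
    - simpl in Hsn. assert (s = 0) by lra. subst. rewrite Rminus_diag, Rabs_R0. simpl; lra.
    - rewrite S_INR in *. destruct (Rle_dec s (INR n * (d/2))) as [Hle|Hlt].
      + pose proof (IHn z s Hs Hle). lra.
      + pose proof (pos_INR n).
        destruct (Rle_dec s (d/2)) as [Hsd|Hsd].
        { assert (Rabs (v z s - v z 0) < 1); [|lra].
          apply Hd'; try lra. unfold nrm, dot, psub; simpl.
          replace (fst z - fst z) with 0 by ring. replace (snd z - snd z) with 0 by ring.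
          replace (0*0+0*0) with 0 by ring. rewrite sqrt_0. lra.
          rewrite Rabs_right; lra. }
        assert (Hs' : 0 <= s - d/2 <= T) by lra.
        assert (A := IHn z (s - d/2) Hs' ltac:(lra)).
        assert (B : Rabs (v z s - v z (s - d/2)) < 1).
        { apply Hd'; try lra. unfold nrm, dot, psub; simpl.
          replace (fst z - fst z) with 0 by ring. replace (snd z - snd z) with 0 by ring.
          replace (0*0+0*0) with 0 by ring. rewrite sqrt_0. lra.
          rewrite Rabs_right; lra. }
        pose proof (Rabs_triang (v z s - v z (s - d/2)) (v z (s - d/2) - v z 0)) as Htr.
        replace (v z s - v z (s - d / 2) + (v z (s - d / 2) - v z 0)) with (v z s - v z 0) in Htr by ring.
        lra. }
  destruct (archimed (2 * T / d)) as [H1 _].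
  assert (Hup : (0 <= up (2 * T / d))%Z).
  { apply le_IZR. assert (0 < 2 * T / d) by (apply Rdiv_lt_0_compat; lra). lra. }
  exists (IZR (up (2 * T / d))). split.
  - apply Rle_ge, IZR_le, Hup.
  - intros z s Hs. rewrite <- (Z2Nat.id _ Hup) in *. rewrite <- INR_IZR_INZ in *.
    apply Hind; auto.
    assert (2 * T / d * (d/2) = T) by (field; lra). nra.
Qed.

Definition hprof (dl z : R) : R :=
  if Rle_dec z 0 then - dl else if Rle_dec z (2 * dl) then - dl - z * z / (4 * dl) else - z.
Definition hder (dl z : R) : R :=
  if Rle_dec z 0 then 0 else if Rle_dec z (2 * dl) then - z / (2 * dl) else - 1.

Lemma hprof_le dl z : dl > 0 -> hprof dl z <= - z /\ hprof dl z <= - dl.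
Proof. intros. unfold hprof. destruct Rle_dec; [lra|]. destruct Rle_dec; [|lra].
  assert (z * z / (4 * dl) - z + dl = (z - 2*dl)*(z-2*dl)/(4*dl)) by (field; lra).
  assert (0 <= (z - 2*dl)*(z-2*dl)/(4*dl)) by (apply Rmult_le_pos; [nra| left; apply Rinv_0_lt_compat; lra]).
  assert (0 <= z * z / (4 * dl)) by (apply Rmult_le_pos; [nra| left; apply Rinv_0_lt_compat; lra]).
  lra. Qed.

Lemma hder_bnd dl z : dl > 0 -> -1 <= hder dl z <= 0.
Proof. intros. unfold hder. destruct Rle_dec; [lra|]. destruct Rle_dec; [|lra].
  split. apply (Rmult_le_reg_r (2*dl)); [lra|]. unfold Rdiv. rewrite Rmult_assoc, Rinv_l by lra. lra.
  unfold Rdiv. assert (0 <= z * / (2*dl)) by (apply Rmult_le_pos; [lra| left; apply Rinv_0_lt_compat; lra]). lra. Qed.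

Lemma hder_neg dl z : z <= 0 -> hder dl z = 0.
Proof. intros. unfold hder. destruct Rle_dec; lra. Qed.

Lemma hprof_taylor dl z d : dl > 0 ->
  hprof dl (z + d) >= hprof dl z + hder dl z * d - d * d / (4 * dl).
Proof.
  intros Hd. unfold hprof, hder.
  assert (Hi : 0 < / (4*dl)) by (apply Rinv_0_lt_compat; lra).
  assert (Hi2 : / (2*dl) = 2 * / (4 * dl)) by (field; lra).
  assert (Hi3 : 1 = 4 * dl * / (4 * dl)) by (field; lra).
  unfold Rdiv. rewrite Hi2.
  set (i := / (4 * dl)) in *.
  assert (Q1 : (z+d)*(z+d)*i >= 0) by (apply Rle_ge, Rmult_le_pos; [apply Rle_0_sqr | lra]).
  assert (Q2 : (z+d-2*dl)*(z+d-2*dl)*i >= 0) by (apply Rle_ge, Rmult_le_pos; [apply Rle_0_sqr | lra]).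
  assert (E1 : dl = (2*dl)*(2*dl)*i) by (unfold i; field; lra).
  assert (E2 : (z+d)*(z+d)*i - (z+d) + dl = (z+d-2*dl)*(z+d-2*dl)*i) by (unfold i; field; lra).
  repeat destruct Rle_dec; try nra.
Qed.

Lemma hprof_lip dl a b : dl > 0 -> Rabs (hprof dl a - hprof dl b) <= Rabs (a - b).
Proof.
  intros Hd. unfold hprof.
  assert (Hi : 0 < / (4*dl)) by (apply Rinv_0_lt_compat; lra).
  assert (Hi3 : 1 = 4 * dl * / (4 * dl)) by (field; lra).
  unfold Rdiv. set (i := / (4 * dl)) in *.
  repeat destruct Rle_dec; unfold Rabs; repeat destruct Rcase_abs; nra.
Qed.

Lemma der_cont f df a b : (forall c, a <= c <= b -> is_derive f c (df c)) ->
  forall c, a <= c <= b -> continuity_pt f c.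
Proof. intros H c Hc. apply continuity_pt_filterlim.
  apply (ex_derive_continuous (K:=R_AbsRing) (V:=R_NormedModule) f).
  eexists; apply H; auto. Qed.

Lemma mvt_between f df x y a b : (forall c, a <= c <= b -> is_derive f c (df c)) ->
  a <= x <= b -> a <= y <= b ->
  exists c, Rmin x y <= c <= Rmax x y /\ f y - f x = df c * (y - x).
Proof.
  intros H Hx Hy. destruct (MVT_gen f x y df) as [c [Hc Hc']].
  - intros z Hz. apply H. unfold Rmin, Rmax in *; destruct Rle_dec; lra.
  - intros z Hz. apply (der_cont f df a b H). unfold Rmin, Rmax in *; destruct Rle_dec; lra.
  - exists c; auto.
Qed.

Lemma taylor_up (g g1 g2 : R -> R) a b M x y :
  (forall c, a <= c <= b -> is_derive g c (g1 c)) ->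
  (forall c, a <= c <= b -> is_derive g1 c (g2 c)) ->
  (forall c, a <= c <= b -> g2 c <= M) -> a <= x <= b -> a <= y <= b ->
  g y <= g x + g1 x * (y - x) + M / 2 * (y - x) ^ 2.
Proof.
  intros Hg Hg1 HM Hx Hy.
  set (k := fun c => g c - (g x + g1 x * (c - x) + M / 2 * (c - x) ^ 2)).
  set (dk := fun c => g1 c - (g1 x + M * (c - x))).
  assert (Hk : forall c, a <= c <= b -> is_derive k c (dk c)).
  { intros c Hc. unfold k, dk.
    assert (HP : is_derive (fun c => g x + g1 x * (c - x) + M / 2 * (c - x) ^ 2) c (g1 x + M * (c - x))).
    { auto_derive; auto. field. }
    exact (is_derive_minus _ _ c _ _ (Hg c Hc) HP). }
  destruct (mvt_between k dk x y a b Hk Hx Hy) as [c [Hc Hc']].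
  assert (Hca : a <= c <= b) by (unfold Rmin, Rmax in *; repeat destruct Rle_dec; lra).
  destruct (mvt_between g1 g2 x c a b Hg1 Hx Hca) as [c' [Hc2 Hc2']].
  assert (Hc'a : a <= c' <= b) by (unfold Rmin, Rmax in *; repeat destruct Rle_dec; lra).
  assert (Hkx : k x = 0) by (unfold k; ring).
  assert (Hdk : dk c = (g2 c' - M) * (c - x)) by (unfold dk; replace (g1 c - (g1 x + M*(c-x))) with ((g1 c - g1 x) - M*(c-x)) by ring; rewrite Hc2'; ring).
  assert (Hpos : 0 <= (c - x) * (y - x)) by (unfold Rmin, Rmax in *; repeat destruct Rle_dec; nra).
  specialize (HM c' Hc'a).
  assert (k y <= 0).
  { rewrite Hkx, Hdk in Hc'. assert ((g2 c' - M) * ((c - x) * (y - x)) <= 0) by nra. nra. }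
  unfold k in H. lra.
Qed.

Lemma nrm_pscale k z : nrm (pscale k z) = Rabs k * nrm z.
Proof. destruct z as [a b]; unfold nrm, dot, pscale; simpl.
  replace (k * a * (k * a) + k * b * (k * b)) with ((k*k) * (a*a+b*b)) by ring.
  rewrite sqrt_mult by nra. f_equal. change (k*k) with (Rsqr k). apply sqrt_Rsqr_abs. Qed.

Lemma nrm_pos_of q : q <> (0,0) -> nrm q > 0.
Proof. intros H. destruct (Rle_lt_or_eq_dec 0 (nrm q) (nrm_ge0 q)); [lra|].
  exfalso; apply H, nrm_eq0; auto. Qed.

Lemma nrm_hat q : q <> (0,0) -> nrm (hat q) = 1.
Proof. intros H. unfold hat. rewrite nrm_pscale. pose proof (nrm_pos_of q H).
  rewrite Rabs_right by (left; apply Rinv_0_lt_compat; lra). field; lra. Qed.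

Lemma dot_expand y z : dot y y = dot z z + 2 * dot z (psub y z) + dot (psub y z) (psub y z).
Proof. destruct y, z; unfold dot, psub; simpl; ring. Qed.

Lemma nrm_up y z : nrm z > 0 ->
  nrm y - nrm z <= dot z (psub y z) / nrm z + dot (psub y z) (psub y z) / (2 * nrm z).
Proof.
  intros Hz. pose proof (nrm_sq z). assert (HA : dot z z > 0) by nra.
  pose proof (sqrt_concave (dot z z) (2 * dot z (psub y z) + dot (psub y z) (psub y z)) HA).
  replace (dot z z + (2 * dot z (psub y z) + dot (psub y z) (psub y z))) with (dot y y) in H0
    by (rewrite (dot_expand y z); ring).
  specialize (H0 (dot_ge0 y)). fold (nrm y) in H0. fold (nrm z) in H0.
  assert (E : (2 * dot z (psub y z) + dot (psub y z) (psub y z)) / (2 * nrm z) =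
    dot z (psub y z) / nrm z + dot (psub y z) (psub y z) / (2 * nrm z)) by (field; lra).
  lra. Qed.

Lemma sq1_up y z :
  sqrt (1 + dot y y) <= sqrt (1 + dot z z) + dot z (psub y z) / sqrt (1 + dot z z) + dot (psub y z) (psub y z) / 2.
Proof.
  pose proof (dot_ge0 z). assert (HA : 1 + dot z z > 0) by lra.
  pose proof (sqrt_concave (1 + dot z z) (2 * dot z (psub y z) + dot (psub y z) (psub y z)) HA).
  replace (1 + dot z z + (2 * dot z (psub y z) + dot (psub y z) (psub y z))) with (1 + dot y y) in H0
    by (rewrite (dot_expand y z); ring).
  pose proof (dot_ge0 y). specialize (H0 ltac:(lra)).
  set (S := sqrt (1 + dot z z)) in *.
  assert (HS : 1 <= S). { unfold S. apply (Rle_trans _ (sqrt 1)); [rewrite sqrt_1; lra | apply sqrt_le_1_alt; lra]. }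
  assert (E : (2 * dot z (psub y z) + dot (psub y z) (psub y z)) / (2 * S) =
    dot z (psub y z) / S + dot (psub y z) (psub y z) / (2 * S)) by (field; lra).
  pose proof (dot_ge0 (psub y z)).
  assert (dot (psub y z) (psub y z) / (2 * S) <= dot (psub y z) (psub y z) / 2).
  { unfold Rdiv. apply Rmult_le_compat_l; auto. apply Rinv_le_contravar; lra. }
  lra. Qed.

Lemma sq1_lip y z : Rabs (sqrt (1 + dot y y) - sqrt (1 + dot z z)) <= Rabs (nrm y - nrm z).
Proof.
  rewrite <- (nrm_sq y), <- (nrm_sq z).
  pose proof (nrm_ge0 y); pose proof (nrm_ge0 z).
  set (a := nrm y) in *; set (b := nrm z) in *.
  assert (Ha : a <= sqrt (1 + a*a)). { apply le_nrm_of with (p := (1, a)) in H. unfold nrm, dot in H; simpl in H. 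
    replace (1 + a*a) with (1*1+a*a) by ring. lra. unfold dot; simpl; nra. }
  assert (Hb : b <= sqrt (1 + b*b)). { apply le_nrm_of with (p := (1, b)) in H0. unfold nrm, dot in H0; simpl in H0.
    replace (1 + b*b) with (1*1+b*b) by ring. lra. unfold dot; simpl; nra. }
  pose proof (sqrt_sqrt (1 + a*a) ltac:(nra)); pose proof (sqrt_sqrt (1 + b*b) ltac:(nra)).
  set (A := sqrt (1 + a*a)) in *; set (B := sqrt (1 + b*b)) in *.
  assert (E : (A - B) * (A + B) = (a - b) * (a + b)) by nra.
  destruct (Rle_dec B A).
  - rewrite (Rabs_right (A - B)) by lra.
    destruct (Rle_dec b a). rewrite Rabs_right by lra. nra. rewrite Rabs_left by lra. nra.
  - rewrite (Rabs_left (A - B)) by lra.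
    destruct (Rle_dec b a). rewrite Rabs_right by lra. nra. rewrite Rabs_left by lra. nra.
Qed.

Definition pos (x : R) := Rmax 0 x.
Lemma pos_ge0 x : 0 <= pos x.
Proof. unfold pos, Rmax; destruct Rle_dec; lra. Qed.
Lemma pos_sq_up s sg t : pos (s + sg - t) * pos (s + sg - t) <= pos (s - t) * pos (s - t) + 2 * pos (s - t) * sg + sg * sg.
Proof. unfold pos, Rmax; repeat destruct Rle_dec; nra. Qed.
Lemma pos_sq_lip s s' t T : 0 < t -> 0 <= s <= T -> 0 <= s' <= T ->
  Rabs (pos (s - t) * pos (s - t) - pos (s' - t) * pos (s' - t)) <= 2 * T * Rabs (s - s').
Proof. intros. unfold pos, Rmax; repeat destruct Rle_dec; unfold Rabs; repeat destruct Rcase_abs; nra. Qed.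

Definition wfun (t th dl K : R) (z : pt) (s : R) : R :=
  hprof dl (nrm z - (1 - th) * s) - th * s - th * sqrt (1 + dot z z) - K * (pos (s - t) * pos (s - t)).

Lemma dot_pscale k z h : dot (pscale k z) h = k * dot z h.
Proof. destruct z, h; unfold dot, pscale; simpl; ring. Qed.

Lemma nrm_le_sq1 z : nrm z <= sqrt (1 + dot z z).
Proof. unfold nrm. apply sqrt_le_1_alt. lra. Qed.
Lemma one_le_sq1 z : 1 <= sqrt (1 + dot z z).
Proof. pose proof (dot_ge0 z). apply (Rle_trans _ (sqrt 1)); [rewrite sqrt_1; lra | apply sqrt_le_1_alt; lra]. Qed.

Lemma w_lip t th dl K z z' s s' T : t > 0 -> 0 < th < 1 -> dl > 0 -> K >= 0 ->
  0 <= s <= T -> 0 <= s' <= T ->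
  Rabs (wfun t th dl K z s - wfun t th dl K z' s') <= (1 + th) * nrm (psub z z') + (1 + 2 * K * T) * Rabs (s - s').
Proof.
  intros Ht Hth Hdl HK Hs Hs'. unfold wfun.
  pose proof (hprof_lip dl (nrm z - (1 - th) * s) (nrm z' - (1 - th) * s') Hdl) as A.
  pose proof (sq1_lip z z') as B.
  pose proof (pos_sq_lip s s' t T Ht Hs Hs') as C.
  pose proof (nrm_lip z z') as D.
  set (h1 := hprof dl (nrm z - (1 - th) * s)) in *.
  set (h2 := hprof dl (nrm z' - (1 - th) * s')) in *.
  set (q1 := sqrt (1 + dot z z)) in *. set (q2 := sqrt (1 + dot z' z')) in *.
  set (p1 := pos (s - t) * pos (s - t)) in *. set (p2 := pos (s' - t) * pos (s' - t)) in *.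
  set (n := nrm (psub z z')) in *.
  assert (Rabs (nrm z - (1 - th) * s - (nrm z' - (1 - th) * s')) <= Rabs (nrm z - nrm z') + (1 - th) * Rabs (s - s')).
  { replace (nrm z - (1 - th) * s - (nrm z' - (1 - th) * s')) with ((nrm z - nrm z') + (1 - th) * (s' - s)) by ring.
    eapply Rle_trans; [apply Rabs_triang|]. rewrite Rabs_mult, (Rabs_right (1 - th)) by lra.
    rewrite (Rabs_minus_sym s' s). lra. }
  assert (Rabs (h1 - th * s - th * q1 - K * p1 - (h2 - th * s' - th * q2 - K * p2)) <=
     Rabs (h1 - h2) + th * Rabs (s - s') + th * Rabs (q1 - q2) + K * Rabs (p1 - p2)).
  { replace (h1 - th * s - th * q1 - K * p1 - (h2 - th * s' - th * q2 - K * p2)) with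
      ((h1 - h2) + (th * (s' - s) + (th * (q2 - q1) + K * (p2 - p1)))) by ring.
    eapply Rle_trans; [apply Rabs_triang|].
    eapply Rle_trans; [apply Rplus_le_compat_l, Rabs_triang|].
    eapply Rle_trans; [apply Rplus_le_compat_l, Rplus_le_compat_l, Rabs_triang|].
    rewrite !Rabs_mult, (Rabs_right th), (Rabs_right K) by lra.
    rewrite (Rabs_minus_sym s' s), (Rabs_minus_sym q2 q1), (Rabs_minus_sym p2 p1). lra. }
  assert (0 <= Rabs (s - s')) by apply Rabs_pos.
  assert (K * Rabs (p1 - p2) <= K * (2 * T * Rabs (s - s'))) by (apply Rmult_le_compat_l; lra).
  assert (th * Rabs (q1 - q2) <= th * n) by (apply Rmult_le_compat_l; lra).
  nra.
Qed.

Lemma w_above t th dl K z s : 0 < th < 1 -> dl > 0 -> K >= 0 -> 0 <= s ->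
  wfun t th dl K z s <= - nrm z + s - th * nrm z - K * (pos (s - t) * pos (s - t)).
Proof.
  intros. unfold wfun. destruct (hprof_le dl (nrm z - (1 - th) * s) H0).
  pose proof (nrm_le_sq1 z). nra. Qed.

Lemma w_at0 t th dl K z : 0 < th < 1 -> dl > 0 -> t > 0 -> wfun t th dl K z 0 <= - nrm z - th.
Proof.
  intros. unfold wfun. destruct (hprof_le dl (nrm z - (1 - th) * 0) H0).
  pose proof (one_le_sq1 z). unfold pos, Rmax. destruct Rle_dec; [lra|].
  replace (nrm z - (1 - th) * 0) with (nrm z) in * by ring. nra. Qed.

Lemma w_below_target t th dl K x : 0 < th < 1 -> dl > 0 -> t > 0 -> nrm x = t ->
  wfun t th dl K x t >= - dl - 2 * th * t - th * sqrt (1 + t * t).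
Proof.
  intros. unfold wfun. rewrite <- nrm_sq, H2.
  replace (t - t) with 0 by ring. unfold pos, Rmax. destruct Rle_dec; [|lra].
  replace (t - (1 - th) * t) with (th * t) by ring.
  assert (hprof dl (th * t) >= - dl - th * t).
  { unfold hprof. assert (0 < th * t) by nra. destruct Rle_dec; [lra|]. destruct Rle_dec; [|lra].
    assert (th * t * (th * t) / (4 * dl) <= th * t).
    { apply (Rmult_le_reg_r (4 * dl)); [lra|]. unfold Rdiv. rewrite Rmult_assoc, Rinv_l by lra. nra. }
    lra. }
  lra. Qed.

Lemma w_taylor t th dl K z0 s0 y s : 0 < th < 1 -> dl > 0 -> K >= 0 -> s0 > 0 ->
  wfun t th dl K y s - wfun t th dl K z0 s0 >=
    (- (1 - th) * hder dl (nrm z0 - (1 - th) * s0) - th - 2 * K * pos (s0 - t)) * (s - s0)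
    + dot (pscale (hder dl (nrm z0 - (1 - th) * s0) / nrm z0 - th / sqrt (1 + dot z0 z0)) z0) (psub y z0)
    - (- hder dl (nrm z0 - (1 - th) * s0) / nrm z0 + / dl + th) / 2 * dot (psub y z0) (psub y z0)
    - (/ (2 * dl) + K) * ((s - s0) * (s - s0)).
Proof.
  intros Hth Hdl HK Hs0. unfold wfun. rewrite dot_pscale.
  set (z1 := nrm z0 - (1 - th) * s0).
  set (h0 := hder dl z1).
  set (S := sqrt (1 + dot z0 z0)).
  set (hh := dot (psub y z0) (psub y z0)).
  set (zh := dot z0 (psub y z0)).
  set (sg := s - s0).
  set (dn := nrm y - nrm z0).
  set (d := dn - (1 - th) * sg).
  assert (Hz : nrm y - (1 - th) * s = z1 + d) by (unfold z1, d, dn, sg; ring).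
  rewrite Hz.
  pose proof (hprof_taylor dl z1 d Hdl) as Ht. fold h0 in Ht.
  destruct (hder_bnd dl z1 Hdl) as [Hb1 Hb2]. fold h0 in Hb1, Hb2.
  assert (Hdn : dn * dn <= hh).
  { unfold dn, hh. pose proof (nrm_lip y z0). pose proof (nrm_sq (psub y z0)).
    pose proof (nrm_ge0 (psub y z0)). revert H; unfold Rabs; destruct Rcase_abs; intros; nra. }
  assert (Hd2 : d * d <= 2 * hh + 2 * (sg * sg)).
  { unfold d. assert (0 <= (dn + (1 - th) * sg) * (dn + (1 - th) * sg)) by apply Rle_0_sqr.
    assert ((1 - th) * (1 - th) <= 1) by nra. assert (0 <= sg * sg) by apply Rle_0_sqr. nra. }
  assert (Hd2' : d * d / (4 * dl) <= hh / (2 * dl) + (sg * sg) / (2 * dl)).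
  { assert (E : hh / (2 * dl) + (sg * sg) / (2 * dl) = (2 * hh + 2 * (sg * sg)) / (4 * dl)) by (field; lra).
    rewrite E. unfold Rdiv. apply Rmult_le_compat_r; [left; apply Rinv_0_lt_compat; lra| lra]. }
  assert (Hfo : h0 * dn >= h0 / nrm z0 * zh + h0 / nrm z0 * hh / 2).
  { destruct (Rle_lt_or_eq_dec 0 (nrm z0) (nrm_ge0 z0)) as [Hp|He].
    - pose proof (nrm_up y z0 Hp) as Hu. fold zh hh dn in Hu.
      assert (h0 * dn >= h0 * (zh / nrm z0 + hh / (2 * nrm z0))) by (apply Rle_ge, Rmult_le_compat_neg_l; lra).
      assert (E : h0 * (zh / nrm z0 + hh / (2 * nrm z0)) = h0 / nrm z0 * zh + h0 / nrm z0 * hh / 2) by (field; lra).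
      lra.
    - assert (Hh0 : h0 = 0).
      { unfold h0. apply hder_neg. unfold z1. rewrite <- He. nra. }
      rewrite Hh0. unfold Rdiv. rewrite !Rmult_0_l. lra. }
  pose proof (sq1_up y z0) as Hq. fold S zh hh in Hq.
  pose proof (pos_sq_up s0 sg t) as Hp. replace (s0 + sg) with s in Hp by (unfold sg; ring).
  assert (HS : 1 <= S) by apply one_le_sq1.
  assert (Hq' : th * sqrt (1 + dot y y) <= th * S + th / S * zh + th * hh / 2).
  { assert (E : th / S * zh = th * (zh / S)) by (field; lra).
    rewrite E. nra. }
  assert (HK2 : K * (pos (s - t) * pos (s - t)) <= K * (pos (s0 - t) * pos (s0 - t) + 2 * pos (s0 - t) * sg + sg * sg))
    by (apply Rmult_le_compat_l; lra).
  assert (E1 : / (2 * dl) * (sg * sg) = sg * sg / (2 * dl)) by (field; lra).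
  assert (E2 : (- h0 / nrm z0 + / dl + th) / 2 * hh = - (h0 / nrm z0 * hh / 2) + hh / (2 * dl) + th * hh / 2).
  { unfold Rdiv. set (inn := / nrm z0). field. lra. }
  rewrite Rmult_plus_distr_r, E1, E2.
  replace ((h0 / nrm z0 - th / S) * zh) with (h0 / nrm z0 * zh - th / S * zh) by ring.
  unfold d in Ht |- *.
  unfold d in Hd2'. assert (Hs : s = s0 + sg) by (unfold sg; ring). rewrite Hs in *. clearbody sg. clear Hs Hz. clearbody d.
  set (P0 := pos (s0 - t)) in *. set (Ps := pos (s0 + sg - t)) in *.
  set (sy := sqrt (1 + dot y y)) in *.
  set (Hz1 := hprof dl z1) in *. set (Hz2 := hprof dl (z1 + (dn - (1 - th) * sg))) in *.
  set (n := nrm z0) in *.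
  assert (A1 : Hz2 - th * (s0 + sg) - th * sy - K * (Ps * Ps) - (Hz1 - th * s0 - th * S - K * (P0 * P0))
     >= h0 * (dn - (1 - th) * sg) - (dn - (1 - th) * sg) * (dn - (1 - th) * sg) / (4 * dl) - th * sg - (th / S * zh + th * hh / 2) - K * (2 * P0 * sg + sg * sg)) by lra.
  assert (A2 : h0 * (dn - (1 - th) * sg) = h0 * dn - (1 - th) * h0 * sg) by ring.
  rewrite A2 in A1.
  assert (A3 : (- (1 - th) * h0 - th - 2 * K * P0) * sg = - ((1 - th) * h0 * sg) - th * sg - K * (2 * P0 * sg)) by ring.
  rewrite A3.
  assert (A4 : K * (2 * P0 * sg + sg * sg) = K * (2 * P0 * sg) + K * (sg * sg)) by ring.
  rewrite A4 in A1.
  lra.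
Qed.

Lemma Rabs_le_inv x b : Rabs x <= b -> - b <= x <= b.
Proof. unfold Rabs; destruct Rcase_abs; intros; lra. Qed.
Lemma abs_fst_sub y z : Rabs (fst y) <= nrm z + nrm (psub y z).
Proof. pose proof (fst_le_nrm z). pose proof (fst_le_nrm (psub y z)). destruct y, z; unfold psub in *; simpl in *.
  pose proof (Rabs_triang r1 (r - r1)). replace (r1 + (r - r1)) with r in H1 by ring. lra. Qed.
Lemma abs_snd_sub y z : Rabs (snd y) <= nrm z + nrm (psub y z).
Proof. pose proof (snd_le_nrm z). pose proof (snd_le_nrm (psub y z)). destruct y, z; unfold psub in *; simpl in *.
  pose proof (Rabs_triang r2 (r0 - r2)). replace (r2 + (r0 - r2)) with r0 in H1 by ring. lra. Qed.
Lemma nrm_psub_pair a b a' b' : nrm (psub (a, b) (a', b')) <= Rabs (a - a') + Rabs (b - b').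
Proof. apply nrm_le_abs. Qed.
Lemma sym_dist_ge0 X Y : 0 <= sym_dist X Y.
Proof. unfold sym_dist. pose proof (Rabs_pos (s11 X - s11 Y)). pose proof (Rabs_pos (s12 X - s12 Y)).
  pose proof (Rabs_pos (s22 X - s22 Y)). lra. Qed.

Lemma u_cmp u t th dl : visc_sol Geff u0 u -> t > 0 -> 0 < th < 1/4 -> dl > 0 ->
  exists K, forall z s, 0 <= s <= t + 1 -> u z s >= wfun t th dl K z s.
Proof.
  intros [Huc [Hinit Hjet]] Ht Hth Hdl.
  set (T' := t + 1).
  destruct (growth u Huc T' ltac:(unfold T'; lra)) as [C1 [HC1 HC]].
  set (K := C1 + T' + 1).
  assert (HK : K >= 0) by (unfold K, T'; lra).
  exists K. intros zs ss Hss. apply Rnot_lt_ge. intro Hneg.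
  set (w := wfun t th dl K).
  assert (Hlow : forall z s, 0 <= s <= T' -> u z s - w z s >= - C1 - T' + th * nrm z + K * (pos (s - t) * pos (s - t))).
  { intros z s Hs. pose proof (HC z s Hs). rewrite Hinit in H. unfold u0 in H.
    pose proof (w_above t th dl K z s ltac:(lra) Hdl HK ltac:(lra)). fold w in H0.
    revert H; unfold Rabs; destruct Rcase_abs; intros; lra. }
  set (R0 := (C1 + T') / th).
  assert (HR0 : forall z s, 0 <= s <= T' -> u z s - w z s < 0 -> nrm z < R0).
  { intros z s Hs Hn. pose proof (Hlow z s Hs). pose proof (pos_ge0 (s - t)).
    assert (0 <= K * (pos (s - t) * pos (s - t))) by (apply Rmult_le_pos; nra).
    unfold R0. apply (Rmult_lt_reg_r th); [lra|]. unfold Rdiv. rewrite Rmult_assoc, Rinv_l by lra. lra. }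
  assert (HR0p : 0 <= R0) by (unfold R0; apply Rmult_le_pos; [unfold T'; lra| left; apply Rinv_0_lt_compat; lra]).
  set (B := R0 + 1).
  set (g := fun a b r => - (u (a, b) r - w (a, b) r)).
  destruct (evt3 g (-B) B (-B) B 0 T' ltac:(unfold B; lra) ltac:(unfold B; lra) ltac:(unfold T'; lra))
    as [m1 [m2 [m3 [Hm1 [Hm2 [Hm3 Hmax]]]]]].
  { intros eta Heta. destruct (Huc T' ltac:(unfold T'; lra) (eta/2) ltac:(lra)) as [du [Hdu Hdu']].
    set (L := 2 * (1 + th) + (1 + 2 * K * T')).
    assert (HL : L > 0) by (unfold L, T'; nra).
    exists (Rmin (du / 2) (eta / (2 * L))). split.
    { apply Rmin_glb_lt; [lra| apply Rdiv_lt_0_compat; lra]. }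
    intros a b r a' b' r' Ha Hb Hr Ha' Hb' Hr' Hda Hdb Hdr.
    assert (Hd1 := Rmin_l (du / 2) (eta / (2 * L))). assert (Hd2 := Rmin_r (du / 2) (eta / (2 * L))).
    pose proof (nrm_psub_pair a b a' b').
    assert (Hu1 : Rabs (u (a, b) r - u (a', b') r') < eta / 2) by (apply Hdu'; try lra).
    pose proof (w_lip t th dl K (a, b) (a', b') r r' T' Ht ltac:(lra) Hdl HK Hr Hr') as Hw1. fold w in Hw1.
    assert (Hw2 : (1 + th) * nrm (psub (a, b) (a', b')) + (1 + 2 * K * T') * Rabs (r - r') <= L * Rmin (du / 2) (eta / (2 * L))).
    { set (mm := Rmin (du / 2) (eta / (2 * L))) in *.
      assert (0 <= 1 + 2 * K * T') by (unfold T'; nra).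
      assert ((1 + th) * nrm (psub (a, b) (a', b')) <= (1 + th) * (2 * mm)) by (apply Rmult_le_compat_l; lra).
      assert ((1 + 2 * K * T') * Rabs (r - r') <= (1 + 2 * K * T') * mm) by (apply Rmult_le_compat_l; lra).
      unfold L. lra. }
    assert (L * Rmin (du / 2) (eta / (2 * L)) <= eta / 2).
    { apply (Rle_trans _ (L * (eta / (2 * L)))); [apply Rmult_le_compat_l; lra|]. right; field; lra. }
    unfold g. replace (- (u (a, b) r - w (a, b) r) - - (u (a', b') r' - w (a', b') r')) with
      (- (u (a, b) r - u (a', b') r') + (w (a, b) r - w (a', b') r')) by ring.
    eapply Rle_lt_trans; [apply Rabs_triang|]. rewrite Rabs_Ropp. lra. }
  set (z0 := (m1, m2)).
  assert (Hgm : forall z s, Rabs (fst z) <= B -> Rabs (snd z) <= B -> 0 <= s <= T' -> u z0 m3 - w z0 m3 <= u z s - w z s).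
  { intros [a b] s Ha Hb Hs. simpl in Ha, Hb. apply Rabs_le_inv in Ha. apply Rabs_le_inv in Hb.
    pose proof (Hmax a b s Ha Hb Hs). unfold g in H. unfold z0. lra. }
  assert (Hneg0 : u z0 m3 - w z0 m3 < 0).
  { assert (nrm zs < R0). { apply (HR0 zs ss). exact Hss. unfold w. lra. }
    pose proof (fst_le_nrm zs); pose proof (snd_le_nrm zs).
    pose proof (Hgm zs ss ltac:(unfold B; lra) ltac:(unfold B; lra) Hss). unfold w in *. lra. }
  assert (Hz0 : nrm z0 < R0) by (apply (HR0 z0 m3); auto).
  assert (Hm3p : m3 > 0).
  { destruct (Rle_lt_or_eq_dec 0 m3 (proj1 Hm3)) as [|He]; auto. rewrite <- He in Hneg0.
    rewrite Hinit in Hneg0. unfold u0 in Hneg0. pose proof (w_at0 t th dl K z0 ltac:(lra) Hdl Ht). fold w in H. lra. }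
  assert (Hm3T : m3 < T').
  { destruct (Rle_lt_or_eq_dec m3 T' (proj2 Hm3)) as [|He]; auto. exfalso.
    pose proof (Hlow z0 m3 Hm3). rewrite He in H, Hneg0. unfold pos, Rmax in H. destruct Rle_dec; [|unfold T' in n; lra].
    replace (T' - t) with 1 in H by (unfold T'; ring). unfold K in H. pose proof (nrm_ge0 z0). nra. }
  set (h0 := hder dl (nrm z0 - (1 - th) * m3)).
  set (S := sqrt (1 + dot z0 z0)).
  set (a := - (1 - th) * h0 - th - 2 * K * pos (m3 - t)).
  set (p := pscale (h0 / nrm z0 - th / S) z0).
  set (M := - h0 / nrm z0 + / dl + th).
  set (X := Sym2 (- M) 0 (- M)).
  assert (Hsub : subjet u z0 m3 a p X).
  { intros eta Heta.
    set (c2 := / (2 * dl) + K).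
    assert (Hc2 : c2 > 0) by (unfold c2; pose proof (Rinv_0_lt_compat (2 * dl) ltac:(lra)); lra).
    exists (Rmin (Rmin 1 (Rmin m3 (T' - m3))) (eta / c2)). split.
    { repeat apply Rmin_glb_lt; try lra. apply Rdiv_lt_0_compat; lra. }
    intros y s Hs Hy Hsd.
    assert (Hd1 := Rmin_l (Rmin 1 (Rmin m3 (T' - m3))) (eta / c2)). assert (Hd2 := Rmin_r (Rmin 1 (Rmin m3 (T' - m3))) (eta / c2)).
    assert (Hd3 := Rmin_l 1 (Rmin m3 (T' - m3))). assert (Hd4 := Rmin_r 1 (Rmin m3 (T' - m3))).
    assert (Hd5 := Rmin_l m3 (T' - m3)). assert (Hd6 := Rmin_r m3 (T' - m3)).
    set (dd := Rmin (Rmin 1 (Rmin m3 (T' - m3))) (eta / c2)) in *.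
    pose proof (abs_fst_sub y z0). pose proof (abs_snd_sub y z0).
    assert (Hsr : 0 <= s <= T') by (apply Rabs_def2 in Hsd; lra).
    pose proof (Hgm y s ltac:(unfold B; lra) ltac:(unfold B; lra) Hsr) as Hg.
    pose proof (w_taylor t th dl K z0 m3 y s ltac:(lra) Hdl HK Hm3p) as Hw. fold h0 S a in Hw.
    fold p in Hw. fold w in Hw. fold M in Hw.
    assert (HX : / 2 * dot (mxv X (psub y z0)) (psub y z0) = - M / 2 * dot (psub y z0) (psub y z0)).
    { unfold X, mxv, dot; simpl. field. }
    rewrite HX.
    assert (Hsq : c2 * ((s - m3) * (s - m3)) <= eta * Rabs (s - m3)).
    { assert (Esq : (s - m3) * (s - m3) = Rabs (s - m3) * Rabs (s - m3)).
      { rewrite <- Rabs_mult. rewrite Rabs_right; [auto| apply Rle_ge, Rle_0_sqr]. }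
      rewrite Esq.
      assert (c2 * Rabs (s - m3) <= eta).
      { apply (Rmult_le_reg_r (/ c2)); [apply Rinv_0_lt_compat; lra|].
        replace (c2 * Rabs (s - m3) * / c2) with (Rabs (s - m3)) by (field; lra). unfold Rdiv in Hd2. lra. }
      pose proof (Rabs_pos (s - m3)). nra. }
    assert (0 <= nrm (psub y z0) ^ 2) by (apply pow2_ge_0).
    assert (0 <= eta * nrm (psub y z0) ^ 2) by (apply Rmult_le_pos; lra).
    unfold c2 in Hsq. lra. }
  destruct (Hjet z0 m3 Hm3p) as [_ Hsubj].
  destruct (Hsubj a p X Hsub (th / 4) (th / 4) ltac:(lra) ltac:(lra)) as [Y [q [Hq0 [Hqd HG]]]].
  unfold Geff, Fbar in HG. rewrite nrm_hat in HG by auto.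
  assert (Hnp : nrm p >= - h0).
  { destruct (hder_bnd dl (nrm z0 - (1 - th) * m3) Hdl) as [Hb1 Hb2]. fold h0 in Hb1, Hb2.
    destruct (Rle_lt_or_eq_dec 0 (nrm z0) (nrm_ge0 z0)) as [Hp|He].
    - unfold p. rewrite nrm_pscale.
      assert (HS : 0 < S) by (pose proof (one_le_sq1 z0); fold S in H; lra).
      assert (0 <= th / S) by (apply Rmult_le_pos; [lra| left; apply Rinv_0_lt_compat; lra]).
      assert (h0 / nrm z0 <= 0) by (pose proof (Rinv_0_lt_compat (nrm z0) Hp); unfold Rdiv; nra).
      rewrite Rabs_left1 by lra.
      assert (E : - (h0 / nrm z0 - th / S) * nrm z0 = - h0 + th / S * nrm z0) by (field; lra).
      rewrite E. assert (0 <= th / S * nrm z0) by (apply Rmult_le_pos; lra). lra.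
    - assert (h0 = 0). { unfold h0. apply hder_neg. rewrite <- He. nra. }
      pose proof (nrm_ge0 p). lra. }
  pose proof (nrm_tri_le p q). rewrite psub_sym in H.
  pose proof (sym_dist_ge0 Y X).
  destruct (hder_bnd dl (nrm z0 - (1 - th) * m3) Hdl) as [Hb1 Hb2]. fold h0 in Hb1, Hb2.
  assert (0 <= 2 * K * pos (m3 - t)) by (pose proof (pos_ge0 (m3 - t)); nra).
  unfold a in HG. nra.
Qed.

Lemma u_nonneg u x t : visc_sol Geff u0 u -> t > 0 -> nrm x = t -> u x t >= 0.
Proof.
  intros Hv Ht Hx. apply Rnot_lt_ge. intro Hn.
  set (v := - u x t).
  set (Q := 2 * t + sqrt (1 + t * t)).
  assert (HQ : Q > 0) by (unfold Q; pose proof (sqrt_pos (1 + t * t)); lra).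
  set (th := Rmin (1/8) (v / (4 * Q))).
  assert (Hth : 0 < th < 1/4).
  { unfold th. split. apply Rmin_glb_lt; [lra| apply Rdiv_lt_0_compat; unfold v; lra].
    pose proof (Rmin_l (1/8) (v / (4 * Q))). lra. }
  destruct (u_cmp u t th (v / 4) Hv Ht Hth ltac:(unfold v; lra)) as [K HK].
  specialize (HK x t ltac:(lra)).
  pose proof (w_below_target t th (v / 4) K x ltac:(lra) ltac:(unfold v; lra) Ht Hx).
  assert (th * Q <= v / 4).
  { apply (Rle_trans _ (v / (4 * Q) * Q)). apply Rmult_le_compat_r; [lra| apply Rmin_r].
    right; field; lra. }
  unfold Q in H0. unfold v in *. lra.
Qed.

Definition fr (E r : R) : R := - / 2 * (r + E * ln (r / E - 1)).
Definition FF (E rho : R) : R := fr E (sqrt rho).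
Definition F1 (E rho : R) : R := - / 4 / (sqrt rho - E).
Definition F2 (E rho : R) : R := / 8 / (sqrt rho * ((sqrt rho - E) * (sqrt rho - E))).

Lemma sqrt_gt E rho : E > 0 -> rho > E * E -> sqrt rho > E.
Proof. intros. rewrite <- (sqrt_square E) by lra. apply sqrt_lt_1_alt. nra. Qed.

Lemma FF_der E rho : E > 0 -> rho > E * E -> is_derive (FF E) rho (F1 E rho).
Proof.
  intros HE Hr. pose proof (sqrt_gt E rho HE Hr). unfold FF, fr, F1.
  assert (Hs : sqrt rho * sqrt rho = rho) by (apply sqrt_sqrt; nra).
  auto_derive.
  - assert (1 < sqrt rho * / E) by (apply (Rmult_lt_reg_r E); [lra|]; rewrite Rmult_assoc, Rinv_l by lra; lra).
    repeat split; nra.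
  - assert (1 < sqrt rho * / E) by (apply (Rmult_lt_reg_r E); [lra|]; rewrite Rmult_assoc, Rinv_l by lra; lra).
    assert (E1 : sqrt rho * / E + - (1) = (sqrt rho - E) / E) by (field; lra).
    rewrite E1. field. repeat split; lra.
Qed.

Lemma F1_der E rho : E > 0 -> rho > E * E -> is_derive (F1 E) rho (F2 E rho).
Proof.
  intros HE Hr. pose proof (sqrt_gt E rho HE Hr). unfold F1, F2.
  auto_derive.
  - split; [nra|]. split; [lra|auto].
  - field. lra.
Qed.

Lemma F2_cont E rho : E > 0 -> rho > E * E -> continuity_pt (F2 E) rho.
Proof.
  intros HE Hr. pose proof (sqrt_gt E rho HE Hr).
  apply continuity_pt_filterlim.
  apply (ex_derive_continuous (K:=R_AbsRing) (V:=R_NormedModule) (F2 E)).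
  unfold F2. auto_derive. repeat split; try nra. 
  assert (0 < sqrt rho * ((sqrt rho - E) * (sqrt rho - E))) by (apply Rmult_lt_0_compat; nra). lra.
Qed.

Definition Xmat (E : R) (z0 : pt) (kap : R) : sym2 :=
  let f1 := F1 E (dot z0 z0) in let f2 := F2 E (dot z0 z0) in
  Sym2 (2 * f1 + 4 * f2 * fst z0 * fst z0 + kap) (4 * f2 * fst z0 * snd z0) (2 * f1 + 4 * f2 * snd z0 * snd z0 + kap).

Lemma Xmat_quad E z0 kap h : / 2 * dot (mxv (Xmat E z0 kap) h) h =
  / 2 * ((2 * F1 E (dot z0 z0) + kap) * dot h h + 4 * F2 E (dot z0 z0) * (dot z0 h * dot z0 h)).
Proof. destruct z0, h; unfold Xmat, mxv, dot; simpl. ring. Qed.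

Lemma fr_taylor E z0 kap : E > 0 -> nrm z0 > E -> kap > 0 ->
  exists dl, dl > 0 /\ forall y, nrm (psub y z0) < dl ->
  fr E (nrm y) <= fr E (nrm z0) + dot (pscale (2 * F1 E (dot z0 z0)) z0) (psub y z0)
     + / 2 * dot (mxv (Xmat E z0 kap) (psub y z0)) (psub y z0).
Proof.
  intros HE Hz Hk.
  set (r0 := nrm z0). set (rho0 := dot z0 z0).
  assert (Hr0 : r0 * r0 = rho0) by apply nrm_sq.
  assert (Hz0 : r0 > E) by exact Hz. clear Hz.
  assert (Hpr : 0 < (r0 - E) * (r0 + E)) by (apply Rmult_lt_0_compat; lra).
  assert (Hrho : rho0 > E * E) by nra.
  set (c := 2 * r0 + 1).
  assert (Hc : c > 0) by (unfold c; lra).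
  set (kp := kap / (2 * (c * c))).
  assert (Hkp : kp > 0) by (unfold kp; apply Rdiv_lt_0_compat; nra).
  pose proof (F2_cont E rho0 HE Hrho) as Hct.
  unfold continuity_pt, continue_in, limit1_in, limit_in in Hct; simpl in Hct; unfold R_dist in Hct.
  destruct (Hct kp Hkp) as [al [Hal Hal']].
  set (d1 := Rmin (al / 2) ((rho0 - E * E) / 2)).
  assert (Hd1 : d1 > 0) by (apply Rmin_glb_lt; lra).
  assert (Hd1a := Rmin_l (al / 2) ((rho0 - E * E) / 2)).
  assert (Hd1b := Rmin_r (al / 2) ((rho0 - E * E) / 2)).
  fold d1 in Hd1a, Hd1b.
  set (f1 := F1 E rho0). set (f2 := F2 E rho0).
  assert (Hf2 : f2 > 0).
  { unfold f2, F2. pose proof (sqrt_gt E rho0 HE Hrho).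
    apply Rdiv_lt_0_compat; [lra|]. apply Rmult_lt_0_compat; nra. }
  set (e3 := kap / (2 * f2 * (4 * r0 + 1))).
  assert (He3 : e3 > 0) by (unfold e3; apply Rdiv_lt_0_compat; [lra|]; pose proof (nrm_ge0 z0); fold r0 in H; nra).
  exists (Rmin 1 (Rmin (d1 / c) e3)). split.
  { repeat apply Rmin_glb_lt; try lra. apply Rdiv_lt_0_compat; lra. }
  intros y Hy.
  assert (Hy1 := Rmin_l 1 (Rmin (d1 / c) e3)). assert (Hy2 := Rmin_r 1 (Rmin (d1 / c) e3)).
  assert (Hy3 := Rmin_l (d1 / c) e3). assert (Hy4 := Rmin_r (d1 / c) e3).
  set (h := psub y z0) in *.
  set (n := nrm h) in *.
  assert (Hn0 : 0 <= n) by apply nrm_ge0.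
  set (zh := dot z0 h). set (hh := dot h h).
  assert (Hhh : hh = n * n) by (unfold hh, n; symmetry; apply nrm_sq).
  assert (Hzh : Rabs zh <= r0 * n) by apply cs.
  assert (Hd : dot y y = rho0 + (2 * zh + hh)) by (unfold rho0, zh, hh, h; rewrite (dot_expand y z0); ring).
  set (d := 2 * zh + hh) in *.
  assert (Hdn : Rabs d <= c * n).
  { unfold d, c. eapply Rle_trans; [apply Rabs_triang|]. rewrite Rabs_mult, (Rabs_right 2) by lra.
    rewrite (Rabs_right hh) by (rewrite Hhh; nra). rewrite Hhh. nra. }
  assert (Hcn : c * n <= d1).
  { apply (Rle_trans _ (c * (d1 / c))). apply Rmult_le_compat_l; lra. right; field; lra. }
  set (a := rho0 - d1). set (b := rho0 + d1).
  assert (Hab : forall cc, a <= cc <= b -> cc > E * E) by (intros; unfold a in *; lra).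
  pose proof (taylor_up (FF E) (F1 E) (F2 E) a b (f2 + kp) rho0 (dot y y)
    (fun cc Hcc => FF_der E cc HE (Hab cc Hcc)) (fun cc Hcc => F1_der E cc HE (Hab cc Hcc))) as Ht.
  assert (HM : forall cc, a <= cc <= b -> F2 E cc <= f2 + kp).
  { intros cc Hcc. destruct (Req_dec cc rho0) as [->|Hne]; [unfold f2; lra|].
    assert (Rabs (F2 E cc - F2 E rho0) < kp).
    { apply Hal'. split; [unfold D_x, no_cond; auto|]. unfold a, b in Hcc.
      apply Rabs_def1; lra. }
    fold f2 in H. apply Rabs_def2 in H. lra. }
  specialize (Ht HM ltac:(unfold a, b; lra)).
  assert (Hyab : a <= dot y y <= b).
  { rewrite Hd. apply Rabs_le_inv in Hdn. unfold a, b. lra. }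
  specialize (Ht Hyab).
  unfold FF in Ht. fold (nrm y) in Ht. fold r0 rho0 in Ht. fold f1 in Ht. rewrite Hd in Ht.
  replace (rho0 + d - rho0) with d in Ht by ring.
  rewrite dot_pscale, Xmat_quad. fold rho0 f1 f2 zh hh.
  assert (Hd2 : d * d <= c * c * (n * n)).
  { assert (Rabs d * Rabs d <= (c * n) * (c * n)) by (pose proof (Rabs_pos d); nra).
    rewrite <- Rabs_mult, Rabs_right in H by nra. nra. }
  assert (Hq1 : kp * (d * d) <= kap / 2 * (n * n)).
  { apply (Rle_trans _ (kp * (c * c * (n * n)))). apply Rmult_le_compat_l; lra.
    unfold kp. right. field. lra. }
  assert (Hq2 : f2 * (4 * zh * hh + hh * hh) <= kap / 2 * (n * n)).
  { assert (4 * zh * hh + hh * hh <= (4 * r0 + 1) * n * (n * n)).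
    { rewrite Hhh. pose proof (Rle_abs zh). assert (n * n <= n) by nra. nra. }
    assert (n <= e3) by lra.
    apply (Rle_trans _ (f2 * ((4 * r0 + 1) * e3 * (n * n)))).
    { apply Rmult_le_compat_l; [lra|]. pose proof (nrm_ge0 z0). fold r0 in H1.
      apply (Rle_trans _ ((4 * r0 + 1) * n * (n * n))); [lra|].
      apply Rmult_le_compat_r; [nra|]. apply Rmult_le_compat_l; lra. }
    unfold e3. right. field. pose proof (nrm_ge0 z0). fold r0 in H1. lra. }
  change (sqrt rho0) with r0 in Ht. replace (d ^ 2) with (d * d) in Ht by ring.
  assert (A : (f2 + kp) / 2 * (d * d) = 2 * f2 * (zh * zh) + / 2 * (f2 * (4 * zh * hh + hh * hh)) + / 2 * (kp * (d * d)))
    by (unfold d; field).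
  assert (B : f1 * d = 2 * f1 * zh + f1 * hh) by (unfold d; ring).
  rewrite A, B in Ht. rewrite <- Hhh in Hq1, Hq2. lra.
Qed.

Lemma abs_mul_le a b A B : Rabs a <= A -> Rabs b <= B -> Rabs (a * b) <= A * B.
Proof. intros. rewrite Rabs_mult. apply Rmult_le_compat; auto; apply Rabs_pos. Qed.

Lemma hat_fst_le q : q <> (0,0) -> Rabs (fst (hat q)) <= 1.
Proof. intros. rewrite <- (nrm_hat q H). apply fst_le_nrm. Qed.
Lemma hat_snd_le q : q <> (0,0) -> Rabs (snd (hat q)) <= 1.
Proof. intros. rewrite <- (nrm_hat q H). apply snd_le_nrm. Qed.

Lemma comp_diff (qi pi nq np D : R) : nq > 0 -> np > 0 -> Rabs (qi / nq) <= 1 ->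
  Rabs (qi - pi) <= D -> Rabs (np - nq) <= D ->
  Rabs (/ nq * qi - / np * pi) <= 2 * D / np.
Proof.
  intros Hq Hp H1 H2 H3.
  replace (/ nq * qi - / np * pi) with ((qi - pi) / np + (qi / nq) * ((np - nq) / np)) by (field; lra).
  eapply Rle_trans; [apply Rabs_triang|].
  assert (Rabs ((qi - pi) / np) <= D / np).
  { unfold Rdiv. rewrite Rabs_mult, (Rabs_right (/ np)) by (left; apply Rinv_0_lt_compat; lra).
    apply Rmult_le_compat_r; [left; apply Rinv_0_lt_compat; lra| auto]. }
  assert (Rabs (qi / nq * ((np - nq) / np)) <= 1 * (D / np)).
  { apply abs_mul_le; auto. unfold Rdiv. rewrite Rabs_mult, (Rabs_right (/ np)) by (left; apply Rinv_0_lt_compat; lra).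
    apply Rmult_le_compat_r; [left; apply Rinv_0_lt_compat; lra| auto]. }
  assert (E : 2 * D / np = D / np + 1 * (D / np)) by (field; lra). lra.
Qed.

Lemma hat_diff q p : q <> (0,0) -> p <> (0,0) ->
  Rabs (fst (hat q) - fst (hat p)) <= 2 * nrm (psub q p) / nrm p /\
  Rabs (snd (hat q) - snd (hat p)) <= 2 * nrm (psub q p) / nrm p.
Proof.
  intros Hq Hp. pose proof (nrm_pos_of q Hq). pose proof (nrm_pos_of p Hp).
  pose proof (hat_fst_le q Hq). pose proof (hat_snd_le q Hq).
  pose proof (fst_le_nrm (psub q p)). pose proof (snd_le_nrm (psub q p)).
  pose proof (nrm_lip p q). rewrite psub_sym in H5.
  unfold hat, pscale in *. destruct q as [q1 q2], p as [p1 p2]; simpl in *.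
  split; apply comp_diff; auto.
  - replace (q1 / nrm (q1, q2)) with (/ nrm (q1, q2) * q1) by (unfold Rdiv; ring). auto.
  - replace (q2 / nrm (q1, q2)) with (/ nrm (q1, q2) * q2) by (unfold Rdiv; ring). auto.
Qed.

Lemma trprod_bound (u1 u2 v1 v2 e E : R) (X Y : sym2) : E > 0 ->
  Rabs u1 <= 1 -> Rabs u2 <= 1 -> Rabs v1 <= 1 -> Rabs v2 <= 1 ->
  Rabs (u1 - v1) <= e -> Rabs (u2 - v2) <= e ->
  trprod (Sym2 (1 - u1 * u1) (- (u1 * u2)) (1 - u2 * u2)) (sscale E Y)
  - trprod (Sym2 (1 - v1 * v1) (- (v1 * v2)) (1 - v2 * v2)) (sscale E X)
  <= E * (2 * sym_dist Y X + 2 * e * (Rabs (s11 X) + 2 * Rabs (s12 X) + Rabs (s22 X))).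
Proof.
  intros HE H1 H2 H3 H4 H5 H6. unfold trprod, sscale, sym_dist; simpl.
  set (a := s11 Y - s11 X). set (b := s12 Y - s12 X). set (c0 := s22 Y - s22 X).
  replace ((1 - u1 * u1) * (E * s11 Y) + 2 * - (u1 * u2) * (E * s12 Y) + (1 - u2 * u2) * (E * s22 Y) -
   ((1 - v1 * v1) * (E * s11 X) + 2 * - (v1 * v2) * (E * s12 X) + (1 - v2 * v2) * (E * s22 X)))
   with (E * (((1 - u1 * u1) * a + 2 * - (u1 * u2) * b + (1 - u2 * u2) * c0) +
          ((v1 * v1 - u1 * u1) * s11 X + 2 * (v1 * v2 - u1 * u2) * s12 X + (v2 * v2 - u2 * u2) * s22 X)))
   by (unfold a, b, c0; ring).
  apply Rmult_le_compat_l; [lra|].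
  assert (Hu1 : Rabs (1 - u1 * u1) <= 1).
  { rewrite Rabs_right. assert (0 <= u1 * u1) by nra. lra. apply Rle_ge.
    assert (Rabs u1 * Rabs u1 <= 1) by (pose proof (Rabs_pos u1); nra). rewrite <- Rabs_mult, Rabs_right in H by nra. lra. }
  assert (Hu2 : Rabs (1 - u2 * u2) <= 1).
  { rewrite Rabs_right. assert (0 <= u2 * u2) by nra. lra. apply Rle_ge.
    assert (Rabs u2 * Rabs u2 <= 1) by (pose proof (Rabs_pos u2); nra). rewrite <- Rabs_mult, Rabs_right in H by nra. lra. }
  assert (Hu12 : Rabs (u1 * u2) <= 1) by (replace 1 with (1 * 1) by ring; apply abs_mul_le; auto).
  assert (D1 : Rabs (v1 * v1 - u1 * u1) <= 2 * e).
  { replace (v1 * v1 - u1 * u1) with ((v1 - u1) * (v1 + u1)) by ring.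
    replace (2 * e) with (e * 2) by ring. apply abs_mul_le. rewrite Rabs_minus_sym; auto.
    eapply Rle_trans; [apply Rabs_triang|]. lra. }
  assert (D2 : Rabs (v2 * v2 - u2 * u2) <= 2 * e).
  { replace (v2 * v2 - u2 * u2) with ((v2 - u2) * (v2 + u2)) by ring.
    replace (2 * e) with (e * 2) by ring. apply abs_mul_le. rewrite Rabs_minus_sym; auto.
    eapply Rle_trans; [apply Rabs_triang|]. lra. }
  assert (D3 : Rabs (v1 * v2 - u1 * u2) <= 2 * e).
  { replace (v1 * v2 - u1 * u2) with (v1 * (v2 - u2) + u2 * (v1 - u1)) by ring.
    eapply Rle_trans; [apply Rabs_triang|].
    assert (Rabs (v1 * (v2 - u2)) <= 1 * e) by (apply abs_mul_le; auto; rewrite Rabs_minus_sym; auto).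
    assert (Rabs (u2 * (v1 - u1)) <= 1 * e) by (apply abs_mul_le; auto; rewrite Rabs_minus_sym; auto).
    lra. }
  set (T1 := (1 - u1 * u1) * a + 2 * - (u1 * u2) * b + (1 - u2 * u2) * c0).
  set (T2 := (v1 * v1 - u1 * u1) * s11 X + 2 * (v1 * v2 - u1 * u2) * s12 X + (v2 * v2 - u2 * u2) * s22 X).
  assert (HT1 : T1 <= Rabs a + 2 * Rabs b + Rabs c0).
  { unfold T1. pose proof (abs_mul_le _ _ _ _ Hu1 (Rle_refl (Rabs a))).
    pose proof (abs_mul_le _ _ _ _ Hu12 (Rle_refl (Rabs b))).
    pose proof (abs_mul_le _ _ _ _ Hu2 (Rle_refl (Rabs c0))).
    pose proof (Rle_abs ((1 - u1 * u1) * a)). pose proof (Rle_abs ((1 - u2 * u2) * c0)).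
    pose proof (Rle_abs (- (u1 * u2 * b))) as Hn. rewrite Rabs_Ropp in Hn. lra. }
  assert (HT2 : T2 <= 2 * e * (Rabs (s11 X) + 2 * Rabs (s12 X) + Rabs (s22 X))).
  { unfold T2. pose proof (abs_mul_le _ _ _ _ D1 (Rle_refl (Rabs (s11 X)))).
    pose proof (abs_mul_le _ _ _ _ D3 (Rle_refl (Rabs (s12 X)))).
    pose proof (abs_mul_le _ _ _ _ D2 (Rle_refl (Rabs (s22 X)))).
    pose proof (Rle_abs ((v1 * v1 - u1 * u1) * s11 X)). pose proof (Rle_abs ((v1 * v2 - u1 * u2) * s12 X)).
    pose proof (Rle_abs ((v2 * v2 - u2 * u2) * s22 X)). lra. }
  pose proof (Rabs_pos a); pose proof (Rabs_pos c0).
  lra.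
Qed.

Lemma Geps_lower E x X p : E > 0 -> p <> (0,0) -> forall ep, ep > 0 -> exists dd, dd > 0 /\
  forall Y q, q <> (0,0) -> sym_dist Y X + nrm (psub q p) < dd -> Geps E x Y q >= Geps E x X p - ep.
Proof.
  intros HE Hp ep Hep.
  set (np := nrm p). assert (Hnp : np > 0) by (apply nrm_pos_of; auto).
  set (Cx := Rabs (s11 X) + 2 * Rabs (s12 X) + Rabs (s22 X)).
  assert (HCx : 0 <= Cx) by (unfold Cx; pose proof (Rabs_pos (s11 X)); pose proof (Rabs_pos (s12 X)); pose proof (Rabs_pos (s22 X)); lra).
  set (L := 2 * E + 4 * E * Cx / np + 1).
  assert (HL : L > 0).
  { unfold L. assert (0 <= 4 * E * Cx / np) by (apply Rmult_le_pos; [nra| left; apply Rinv_0_lt_compat; lra]). lra. }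
  exists (ep / L). split; [apply Rdiv_lt_0_compat; lra|].
  intros Y q Hq Hd.
  set (D := nrm (psub q p)) in *. set (sd := sym_dist Y X) in *.
  assert (HD : 0 <= D) by apply nrm_ge0. assert (Hsd : 0 <= sd) by apply sym_dist_ge0.
  destruct (hat_diff q p Hq Hp) as [Hd1 Hd2]. fold D np in Hd1, Hd2.
  pose proof (trprod_bound (fst (hat q)) (snd (hat q)) (fst (hat p)) (snd (hat p)) (2 * D / np) E X Y HE
    (hat_fst_le q Hq) (hat_snd_le q Hq) (hat_fst_le p Hp) (hat_snd_le p Hp) Hd1 Hd2) as Ht.
  fold sd Cx in Ht.
  pose proof (nrm_lip q p). fold D in H.
  unfold Geps, F, c, projm. cbv zeta. fold np.
  assert (Hb : E * (2 * sd + 2 * (2 * D / np) * Cx) + D <= L * (sd + D)).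
  { unfold L. assert (E1 : E * (2 * sd + 2 * (2 * D / np) * Cx) = 2 * E * sd + 4 * E * Cx / np * D) by (field; lra).
    rewrite E1. assert (0 <= 4 * E * Cx / np * sd) by (apply Rmult_le_pos; [apply Rmult_le_pos; [nra| left; apply Rinv_0_lt_compat; lra]| lra]).
    assert (0 <= 2 * E * D) by nra. nra. }
  assert (L * (sd + D) < ep).
  { apply (Rmult_lt_compat_l L) in Hd; [|lra]. replace (L * (ep / L)) with ep in Hd by (field; lra). lra. }
  change (nrm p) with np in H. revert H; unfold Rabs; destruct Rcase_abs; intros; lra.
Qed.


Lemma ln_le_sub1 x : 0 < x -> ln x <= x - 1.
Proof. intros. pose proof (exp_ineq1_le (ln x)). rewrite exp_ln in H0 by auto. lra. Qed.

Lemma ln2_lt1 : ln 2 < 1.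
Proof. rewrite <- (ln_exp 1). apply ln_increasing; [lra|]. pose proof (exp_ineq1 1 ltac:(lra)). lra. Qed.

Lemma ln_le_half x : 0 < x -> ln x <= x / 2.
Proof. intros. replace x with ((x / 2) * 2) at 1 by field. rewrite ln_mult by lra.
  pose proof (ln_le_sub1 (x / 2) ltac:(lra)). pose proof ln2_lt1. lra. Qed.

Lemma ln_lip a b m : m > 0 -> a >= m -> b >= m -> Rabs (ln a - ln b) <= Rabs (a - b) / m.
Proof.
  intros Hm Ha Hb.
  assert (K : forall a b, a >= m -> b >= m -> b <= a -> ln a - ln b <= (a - b) / m).
  { intros a' b' Ha' Hb' Hab. replace (ln a' - ln b') with (ln (a' / b')).
    - pose proof (ln_le_sub1 (a' / b') ltac:(apply Rdiv_lt_0_compat; lra)).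
      assert (a' / b' - 1 = (a' - b') / b') by (field; lra).
      assert ((a' - b') / b' <= (a' - b') / m).
      { unfold Rdiv. apply Rmult_le_compat_l; [lra|]. apply Rinv_le_contravar; lra. }
      lra.
    - unfold Rdiv. rewrite ln_mult, ln_Rinv by (try apply Rinv_0_lt_compat; lra). ring. }
  assert (0 <= ln a - ln b \/ ln a - ln b < 0) by lra.
  destruct (Rle_dec b a).
  - pose proof (K a b Ha Hb r). assert (ln b <= ln a).
    { destruct (Req_dec a b). subst; lra. left; apply ln_increasing; lra. }
    rewrite Rabs_right by lra. rewrite Rabs_right by lra. auto.
  - pose proof (K b a Hb Ha ltac:(lra)). assert (ln a < ln b) by (apply ln_increasing; lra).
    rewrite Rabs_left by lra. rewrite Rabs_left by lra. lra.
Qed.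

Lemma fr_ge E r : E > 0 -> r > E -> fr E r >= - (3 / 4) * r.
Proof.
  intros. unfold fr. assert (0 < r / E - 1).
  { apply (Rmult_lt_reg_r E); [lra|]. unfold Rdiv. rewrite Rmult_minus_distr_r, Rmult_assoc, Rinv_l by lra. lra. }
  pose proof (ln_le_half _ H1).
  assert (E * ln (r / E - 1) <= E * ((r / E - 1) / 2)) by (apply Rmult_le_compat_l; lra).
  assert (E * ((r / E - 1) / 2) = (r - E) / 2) by (field; lra). lra. Qed.

Lemma fr_init E r : E > 0 -> r > E -> fr E r - / 2 * E >= - r + E / 2.
Proof.
  intros. unfold fr. assert (0 < r / E - 1).
  { apply (Rmult_lt_reg_r E); [lra|]. unfold Rdiv. rewrite Rmult_minus_distr_r, Rmult_assoc, Rinv_l by lra. lra. }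
  pose proof (ln_le_sub1 _ H1).
  assert (E * ln (r / E - 1) <= E * (r / E - 1 - 1)) by (apply Rmult_le_compat_l; lra).
  assert (E * (r / E - 1 - 1) = r - 2 * E) by (field; lra). lra. Qed.

Lemma fr_mono E r r' : E > 0 -> E < r -> r <= r' -> fr E r' <= fr E r.
Proof.
  intros. unfold fr. assert (0 < r / E - 1).
  { apply (Rmult_lt_reg_r E); [lra|]. unfold Rdiv. rewrite Rmult_minus_distr_r, Rmult_assoc, Rinv_l by lra. lra. }
  assert (r / E <= r' / E) by (unfold Rdiv; apply Rmult_le_compat_r; [left; apply Rinv_0_lt_compat|]; lra).
  assert (ln (r / E - 1) <= ln (r' / E - 1)).
  { destruct (Req_dec (r / E) (r' / E)). rewrite H4; lra. left; apply ln_increasing; lra. }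
  assert (E * ln (r / E - 1) <= E * ln (r' / E - 1)) by (apply Rmult_le_compat_l; lra). lra. Qed.

Lemma fr_lip E r r' m : E > 0 -> m > 0 -> r / E - 1 >= m -> r' / E - 1 >= m ->
  Rabs (fr E r - fr E r') <= / 2 * (1 + / m) * Rabs (r - r').
Proof.
  intros HE Hm Hr Hr'. unfold fr.
  pose proof (ln_lip _ _ m Hm Hr Hr').
  replace (r / E - 1 - (r' / E - 1)) with ((r - r') / E) in H by (field; lra).
  unfold Rdiv in H. rewrite Rabs_mult, (Rabs_right (/ E)) in H by (left; apply Rinv_0_lt_compat; lra).
  replace (- / 2 * (r + E * ln (r / E - 1)) - - / 2 * (r' + E * ln (r' / E - 1))) with
    (- / 2 * ((r - r') + E * (ln (r / E - 1) - ln (r' / E - 1)))) by ring.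
  rewrite Rabs_mult, Rabs_Ropp, (Rabs_right (/ 2)) by lra.
  eapply Rle_trans. apply Rmult_le_compat_l; [lra| apply Rabs_triang].
  rewrite Rabs_mult, (Rabs_right E) by lra.
  assert (E * Rabs (ln (r / E - 1) - ln (r' / E - 1)) <= / m * Rabs (r - r')).
  { apply (Rle_trans _ (E * (Rabs (r - r') * / E * / m))). apply Rmult_le_compat_l; lra.
    right; field; lra. }
  lra.
Qed.

Definition phic (E t lam K r1 : R) (z : pt) (s : R) : R :=
  fr E (Rmax (nrm z) r1) + / 2 * s - / 2 * E + lam * s + K * (pos (s - t) * pos (s - t)).

Lemma tr_id a0 b0 r0 f1 f2 k : r0 > 0 -> r0 * r0 = a0 * a0 + b0 * b0 ->
  (1 - (- a0 / r0) * (- a0 / r0)) * (2 * f1 + 4 * f2 * a0 * a0 + k)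
  + 2 * (- ((- a0 / r0) * (- b0 / r0))) * (4 * f2 * a0 * b0)
  + (1 - (- b0 / r0) * (- b0 / r0)) * (2 * f1 + 4 * f2 * b0 * b0 + k) = 2 * f1 + k.
Proof.
  intros Hr Hs.
  assert (E1 : 1 - (- a0 / r0) * (- a0 / r0) = (r0 * r0 - a0 * a0) / (r0 * r0)) by (field; lra).
  assert (E2 : 1 - (- b0 / r0) * (- b0 / r0) = (r0 * r0 - b0 * b0) / (r0 * r0)) by (field; lra).
  rewrite E1, E2. replace (r0 * r0 - a0 * a0) with (b0 * b0) by lra.
  replace (r0 * r0 - b0 * b0) with (a0 * a0) by lra.
  transitivity ((a0 * a0 + b0 * b0) * (2 * f1 + k) / (r0 * r0)).
  - field. lra.
  - rewrite <- Hs. field. lra.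
Qed.

Lemma Geps_at E z0 kap x : E > 0 -> nrm z0 > E ->
  Geps E x (Xmat E z0 kap) (pscale (2 * F1 E (dot z0 z0)) z0) = - / 2 - E * kap.
Proof.
  intros HE Hz.
  set (r0 := nrm z0) in *.
  assert (Hf : F1 E (dot z0 z0) = - / 4 / (r0 - E)) by reflexivity.
  set (f1 := F1 E (dot z0 z0)) in *. set (f2 := F2 E (dot z0 z0)).
  assert (Hk : 2 * f1 < 0) by (rewrite Hf; unfold Rdiv; assert (0 < / (r0 - E)) by (apply Rinv_0_lt_compat; lra); nra).
  assert (Hnp : nrm (pscale (2 * f1) z0) = - (2 * f1) * r0) by (rewrite nrm_pscale, Rabs_left; auto).
  assert (Hr0 : r0 * r0 = fst z0 * fst z0 + snd z0 * snd z0) by apply nrm_sq.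
  unfold Geps, F, c, projm, hat. cbv zeta. rewrite Hnp.
  unfold pscale, Xmat, trprod, sscale. simpl. fold f1 f2.
  replace (/ (- (2 * f1) * r0) * (2 * f1 * fst z0)) with (- fst z0 / r0) by (field; split; lra).
  replace (/ (- (2 * f1) * r0) * (2 * f1 * snd z0)) with (- snd z0 / r0) by (field; split; lra).
  pose proof (tr_id (fst z0) (snd z0) r0 f1 f2 kap ltac:(lra) Hr0) as Ht.
  transitivity (- (E * (2 * f1 + kap)) - 1 * (- (2 * f1) * r0)).
  - rewrite <- Ht. ring.
  - rewrite Hf. field. lra.
Qed.

Lemma ue_cmp ue E t lam : visc_sol (Geps E) u0 ue -> E > 0 -> t > E -> lam > 0 ->
  exists K, forall z s, nrm z > E -> 0 <= s <= t + 1 ->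
    ue z s <= fr E (nrm z) + / 2 * s - / 2 * E + lam * s + K * (pos (s - t) * pos (s - t)).
Proof.
  intros [Huc [Hinit Hjet]] HE Ht Hlam.
  set (T' := t + 1).
  destruct (growth ue Huc T' ltac:(unfold T'; lra)) as [C1 [HC1 HC]].
  set (K := C1 + E + 1).
  assert (HK : K > 0) by (unfold K; lra).
  exists K. intros zs ss Hzs Hss. apply Rnot_lt_le. intro Hpos.
  set (A := 2 * (C1 + E) / E + 1).
  assert (HA : A * E = 2 * (C1 + E) + E) by (unfold A; field; lra).
  set (m0 := exp (- (A + 1))).
  assert (Hm0 : 0 < m0 < 1).
  { unfold m0. split; [apply exp_pos|].
    assert (0 <= 2 * (C1 + E) / E) by (apply Rmult_le_pos; [lra| left; apply Rinv_0_lt_compat; lra]).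
    assert (exp (- (A + 1)) < exp 0) by (apply exp_increasing; unfold A; lra).
    rewrite exp_0 in H0. exact H0. }
  set (r1 := E * (1 + m0)).
  assert (Hr1 : E < r1 < 2 * E) by (unfold r1; nra).
  assert (Hr1m : r1 / E - 1 = m0) by (unfold r1; field; lra).
  assert (Hfr1 : fr E r1 = - / 2 * r1 + / 2 * E * (A + 1)).
  { unfold fr. rewrite Hr1m. unfold m0. rewrite ln_exp. ring. }
  set (Phi := phic E t lam K r1).
  assert (Hup : forall z s, 0 <= s <= T' -> ue z s <= - nrm z + C1).
  { intros z s Hs. pose proof (HC z s Hs). rewrite Hinit in H. unfold u0 in H.
    revert H; unfold Rabs; destruct Rcase_abs; intros; lra. }
  assert (Hposs : forall s, 0 <= s -> 0 <= / 2 * s + lam * s + K * (pos (s - t) * pos (s - t))).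
  { intros s Hs. pose proof (pos_ge0 (s - t)). assert (0 <= K * (pos (s - t) * pos (s - t))) by (apply Rmult_le_pos; nra). nra. }
  assert (B1 : forall z s, nrm z <= r1 -> 0 <= s <= T' -> ue z s - Phi z s < 0).
  { intros z s Hz Hs. pose proof (Hup z s Hs). pose proof (nrm_ge0 z). pose proof (Hposs s (proj1 Hs)).
    unfold Phi, phic. rewrite Rmax_right by lra. rewrite Hfr1. nra. }
  assert (B2 : forall z s, r1 <= nrm z -> 0 <= s <= T' -> ue z s - Phi z s <= - / 4 * nrm z + C1 + / 2 * E - K * (pos (s - t) * pos (s - t))).
  { intros z s Hz Hs. pose proof (Hup z s Hs). pose proof (fr_ge E (nrm z) HE ltac:(lra)).
    assert (0 <= / 2 * s + lam * s) by nra.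
    unfold Phi, phic. rewrite Rmax_left by lra. lra. }
  set (R0 := 4 * (C1 + E) + r1).
  assert (HR0 : forall z s, 0 <= s <= T' -> ue z s - Phi z s > 0 -> r1 < nrm z < R0).
  { intros z s Hs Hg. destruct (Rle_dec (nrm z) r1) as [Hl|Hl].
    - pose proof (B1 z s Hl Hs). lra.
    - split; [lra|]. pose proof (B2 z s ltac:(lra) Hs). pose proof (pos_ge0 (s - t)).
      assert (0 <= K * (pos (s - t) * pos (s - t))) by (apply Rmult_le_pos; nra).
      unfold R0. lra. }
  assert (Hzs2 : ue zs ss - Phi zs ss > 0).
  { unfold Phi, phic. destruct (Rle_dec (nrm zs) r1).
    - rewrite Rmax_right by lra. pose proof (fr_mono E (nrm zs) r1 HE Hzs r). lra.
    - rewrite Rmax_left by lra. lra. }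
  set (B := R0 + 1).
  set (g := fun a b r => ue (a, b) r - Phi (a, b) r).
  set (Lf := / 2 * (1 + / m0)).
  assert (HLf : Lf > 0) by (unfold Lf; pose proof (Rinv_0_lt_compat m0 ltac:(lra)); lra).
  assert (Hphilip : forall z z' s s', 0 <= s <= T' -> 0 <= s' <= T' ->
     Rabs (Phi z s - Phi z' s') <= Lf * nrm (psub z z') + (/ 2 + lam + 2 * K * T') * Rabs (s - s')).
  { intros z z' s s' Hs Hs'. unfold Phi, phic.
    assert (Hm1 : forall w, Rmax w r1 / E - 1 >= m0).
    { intro w. rewrite <- Hr1m. unfold Rdiv. apply Rle_ge. apply Rplus_le_compat_r.
      apply Rmult_le_compat_r; [left; apply Rinv_0_lt_compat; lra| apply Rmax_r]. }
    pose proof (fr_lip E (Rmax (nrm z) r1) (Rmax (nrm z') r1) m0 HE ltac:(lra) (Hm1 _) (Hm1 _)) as Hf. fold Lf in Hf.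
    assert (Hmx : Rabs (Rmax (nrm z) r1 - Rmax (nrm z') r1) <= nrm (psub z z')).
    { pose proof (nrm_lip z z'). unfold Rmax; repeat destruct Rle_dec; revert H; unfold Rabs; repeat destruct Rcase_abs; intros; lra. }
    pose proof (pos_sq_lip s s' t T' ltac:(lra) Hs Hs') as Hq.
    set (f := fr E (Rmax (nrm z) r1)) in *. set (f' := fr E (Rmax (nrm z') r1)) in *.
    set (P := pos (s - t) * pos (s - t)) in *. set (P' := pos (s' - t) * pos (s' - t)) in *.
    replace (f + / 2 * s - / 2 * E + lam * s + K * P - (f' + / 2 * s' - / 2 * E + lam * s' + K * P'))
      with ((f - f') + ((/ 2 + lam) * (s - s') + K * (P - P'))) by ring.
    eapply Rle_trans; [apply Rabs_triang|]. eapply Rle_trans; [apply Rplus_le_compat_l, Rabs_triang|].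
    rewrite !Rabs_mult, (Rabs_right (/ 2 + lam)), (Rabs_right K) by lra.
    assert (Lf * Rabs (Rmax (nrm z) r1 - Rmax (nrm z') r1) <= Lf * nrm (psub z z')) by (apply Rmult_le_compat_l; lra).
    assert (K * Rabs (P - P') <= K * (2 * T' * Rabs (s - s'))) by (apply Rmult_le_compat_l; lra).
    lra. }
  destruct (evt3 g (-B) B (-B) B 0 T' ltac:(unfold B, R0; lra) ltac:(unfold B, R0; lra) ltac:(unfold T'; lra))
    as [m1 [m2 [m3 [Hm1 [Hm2 [Hm3 Hmax]]]]]].
  { intros eta Heta. destruct (Huc T' ltac:(unfold T'; lra) (eta/2) ltac:(lra)) as [du [Hdu Hdu']].
    set (L := 2 * Lf + (/ 2 + lam + 2 * K * T')).
    assert (HL : L > 0) by (unfold L, T'; nra).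
    exists (Rmin (du / 2) (eta / (2 * L))). split.
    { apply Rmin_glb_lt; [lra| apply Rdiv_lt_0_compat; lra]. }
    intros a b r a' b' r' Ha Hb Hr Ha' Hb' Hr' Hda Hdb Hdr.
    assert (Hd1 := Rmin_l (du / 2) (eta / (2 * L))). assert (Hd2 := Rmin_r (du / 2) (eta / (2 * L))).
    pose proof (nrm_psub_pair a b a' b').
    assert (Hu1 : Rabs (ue (a, b) r - ue (a', b') r') < eta / 2) by (apply Hdu'; try lra).
    pose proof (Hphilip (a, b) (a', b') r r' Hr Hr') as Hw1.
    assert (Hw2 : Lf * nrm (psub (a, b) (a', b')) + (/ 2 + lam + 2 * K * T') * Rabs (r - r') <= L * Rmin (du / 2) (eta / (2 * L))).
    { set (mm := Rmin (du / 2) (eta / (2 * L))) in *.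
      assert (0 <= / 2 + lam + 2 * K * T') by (unfold T'; nra).
      assert (Lf * nrm (psub (a, b) (a', b')) <= Lf * (2 * mm)) by (apply Rmult_le_compat_l; lra).
      assert ((/ 2 + lam + 2 * K * T') * Rabs (r - r') <= (/ 2 + lam + 2 * K * T') * mm) by (apply Rmult_le_compat_l; lra).
      unfold L. lra. }
    assert (L * Rmin (du / 2) (eta / (2 * L)) <= eta / 2).
    { apply (Rle_trans _ (L * (eta / (2 * L)))); [apply Rmult_le_compat_l; lra|]. right; field; lra. }
    unfold g. replace (ue (a, b) r - Phi (a, b) r - (ue (a', b') r' - Phi (a', b') r')) with
      ((ue (a, b) r - ue (a', b') r') + - (Phi (a, b) r - Phi (a', b') r')) by ring.
    eapply Rle_lt_trans; [apply Rabs_triang|]. rewrite Rabs_Ropp. lra. }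
  set (z0 := (m1, m2)).
  assert (Hgm : forall z s, Rabs (fst z) <= B -> Rabs (snd z) <= B -> 0 <= s <= T' -> ue z s - Phi z s <= ue z0 m3 - Phi z0 m3).
  { intros [a b] s Ha Hb Hs. simpl in Ha, Hb. apply Rabs_le_inv in Ha. apply Rabs_le_inv in Hb.
    pose proof (Hmax a b s Ha Hb Hs). unfold g in H. unfold z0. lra. }
  assert (Hss' : 0 <= ss <= T') by exact Hss.
  assert (Hpos0 : ue z0 m3 - Phi z0 m3 > 0).
  { destruct (HR0 zs ss Hss' Hzs2).
    pose proof (fst_le_nrm zs); pose proof (snd_le_nrm zs).
    pose proof (Hgm zs ss ltac:(unfold B; lra) ltac:(unfold B; lra) Hss'). lra. }
  destruct (HR0 z0 m3 Hm3 Hpos0) as [Hz0a Hz0b].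
  assert (Hm3p : m3 > 0).
  { destruct (Rle_lt_or_eq_dec 0 m3 (proj1 Hm3)) as [|He]; auto. rewrite <- He in Hpos0.
    rewrite Hinit in Hpos0. unfold u0, Phi, phic in Hpos0. rewrite Rmax_left in Hpos0 by lra.
    pose proof (fr_init E (nrm z0) HE ltac:(lra)). unfold pos, Rmax in Hpos0. destruct Rle_dec; [lra|]. lra. }
  assert (Hm3T : m3 < T').
  { destruct (Rle_lt_or_eq_dec m3 T' (proj2 Hm3)) as [|He]; auto. exfalso.
    pose proof (B2 z0 m3 ltac:(lra) Hm3). rewrite He in H, Hpos0. unfold pos, Rmax in H. destruct Rle_dec; [|unfold T' in n; lra].
    replace (T' - t) with 1 in H by (unfold T'; ring). unfold K in H. lra. }
  set (kap := lam / (2 * E)).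
  assert (Hkap : kap > 0) by (unfold kap; apply Rdiv_lt_0_compat; lra).
  set (a := / 2 + lam + 2 * K * pos (m3 - t)).
  set (p := pscale (2 * F1 E (dot z0 z0)) z0).
  set (X := Xmat E z0 kap).
  assert (Hsup : superjet ue z0 m3 a p X).
  { intros eta Heta.
    destruct (fr_taylor E z0 kap HE ltac:(lra) Hkap) as [ds [Hds Hds']].
    exists (Rmin (Rmin (Rmin 1 (nrm z0 - r1)) (Rmin m3 (T' - m3))) (Rmin ds (eta / K))). split.
    { repeat apply Rmin_glb_lt; try lra. apply Rdiv_lt_0_compat; lra. }
    intros y s Hs Hy Hsd.
    set (dd := Rmin (Rmin (Rmin 1 (nrm z0 - r1)) (Rmin m3 (T' - m3))) (Rmin ds (eta / K))) in *.
    assert (H1 : dd <= 1 /\ dd <= nrm z0 - r1 /\ dd <= m3 /\ dd <= T' - m3 /\ dd <= ds /\ dd <= eta / K).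
    { unfold dd.
      pose proof (Rmin_l (Rmin (Rmin 1 (nrm z0 - r1)) (Rmin m3 (T' - m3))) (Rmin ds (eta / K))).
      pose proof (Rmin_r (Rmin (Rmin 1 (nrm z0 - r1)) (Rmin m3 (T' - m3))) (Rmin ds (eta / K))).
      pose proof (Rmin_l (Rmin 1 (nrm z0 - r1)) (Rmin m3 (T' - m3))).
      pose proof (Rmin_r (Rmin 1 (nrm z0 - r1)) (Rmin m3 (T' - m3))).
      pose proof (Rmin_l 1 (nrm z0 - r1)). pose proof (Rmin_r 1 (nrm z0 - r1)).
      pose proof (Rmin_l m3 (T' - m3)). pose proof (Rmin_r m3 (T' - m3)).
      pose proof (Rmin_l ds (eta / K)). pose proof (Rmin_r ds (eta / K)).
      repeat split; lra. }
    destruct H1 as [Hd1 [Hd2 [Hd3 [Hd4 [Hd5 Hd6]]]]].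
    pose proof (abs_fst_sub y z0). pose proof (abs_snd_sub y z0).
    assert (Hsr : 0 <= s <= T') by (apply Rabs_def2 in Hsd; lra).
    pose proof (Hgm y s ltac:(unfold B; lra) ltac:(unfold B; lra) Hsr) as Hg.
    assert (Hny : r1 <= nrm y).
    { pose proof (nrm_tri_le z0 y). rewrite psub_sym in H1. lra. }
    pose proof (Hds' y ltac:(lra)) as Hft. fold p X in Hft.
    unfold Phi, phic in Hg. rewrite (Rmax_left (nrm y)) in Hg by lra. rewrite (Rmax_left (nrm z0)) in Hg by lra.
    pose proof (pos_sq_up m3 (s - m3) t) as Hq. replace (m3 + (s - m3)) with s in Hq by ring.
    assert (HKq : K * (pos (s - t) * pos (s - t)) <= K * (pos (m3 - t) * pos (m3 - t) + 2 * pos (m3 - t) * (s - m3) + (s - m3) * (s - m3)))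
      by (apply Rmult_le_compat_l; lra).
    assert (Hsq : K * ((s - m3) * (s - m3)) <= eta * Rabs (s - m3)).
    { assert (Esq : (s - m3) * (s - m3) = Rabs (s - m3) * Rabs (s - m3)).
      { rewrite <- Rabs_mult. rewrite Rabs_right; [auto| apply Rle_ge, Rle_0_sqr]. }
      rewrite Esq.
      assert (K * Rabs (s - m3) <= eta).
      { apply (Rmult_le_reg_r (/ K)); [apply Rinv_0_lt_compat; lra|].
        replace (K * Rabs (s - m3) * / K) with (Rabs (s - m3)) by (field; lra). unfold Rdiv in Hd6. lra. }
      pose proof (Rabs_pos (s - m3)). nra. }
    assert (0 <= nrm (psub y z0) ^ 2) by (apply pow2_ge_0).
    assert (0 <= eta * nrm (psub y z0) ^ 2) by (apply Rmult_le_pos; lra).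
    unfold a. lra. }
  destruct (Hjet z0 m3 Hm3p) as [Hsupj _].
  assert (Hp0 : p <> (0, 0)).
  { intro Hp. assert (nrm p = 0) by (rewrite Hp; unfold nrm, dot; simpl; rewrite Rmult_0_l, Rplus_0_l; apply sqrt_0).
    unfold p in H. rewrite nrm_pscale in H.
    assert (F1 E (dot z0 z0) = - / 4 / (nrm z0 - E)) by reflexivity.
    assert (F1 E (dot z0 z0) < 0) by (rewrite H0; unfold Rdiv; assert (0 < / (nrm z0 - E)) by (apply Rinv_0_lt_compat; lra); nra).
    assert (Rabs (2 * F1 E (dot z0 z0)) > 0) by (rewrite Rabs_left; lra). nra. }
  destruct (Geps_lower E z0 X p HE Hp0 (lam / 4) ltac:(lra)) as [dd [Hdd Hdd']].
  destruct (Hsupj a p X Hsup (lam / 8) dd ltac:(lra) Hdd) as [Y [q [Hq0 [Hqd HG]]]].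
  pose proof (Hdd' Y q Hq0 Hqd) as HG2.
  unfold X, p in HG2. rewrite (Geps_at E z0 kap z0 HE ltac:(lra)) in HG2.
  unfold kap in HG2. replace (E * (lam / (2 * E))) with (lam / 2) in HG2 by (field; lra).
  assert (0 <= 2 * K * pos (m3 - t)) by (pose proof (pos_ge0 (m3 - t)); nra).
  unfold a in HG. lra.
Qed.

Theorem proposition1p5 :
  forall eps : R, eps > 0 ->
  forall ue u : pt -> R -> R,
    visc_sol (Geps eps) u0 ue ->
    visc_sol Geff u0 u ->
    forall (x : pt) (t : R), 0 <= t -> nrm x = t -> t > eps * (1 + exp (-1)) ->
      Rabs (ue x t - u x t) >= / 2 * eps * (ln (t / eps - 1) + 1).
Proof.
  intros eps He ue u Hue Hu x t Ht0 Hx Ht.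
  assert (Hte : t > eps) by (pose proof (exp_pos (-1)); nra).
  pose proof (u_nonneg u x t Hu ltac:(lra) Hx) as Hu0.
  set (V := fr eps t + / 2 * t - / 2 * eps).
  assert (HV : V = - (/ 2 * eps * (ln (t / eps - 1) + 1))) by (unfold V, fr; ring).
  assert (Hle : ue x t <= V).
  { apply Rnot_lt_le. intro Hlt.
    set (lam := (ue x t - V) / (2 * t)).
    assert (Hlam : lam > 0) by (unfold lam; apply Rdiv_lt_0_compat; lra).
    destruct (ue_cmp ue eps t lam Hue He Hte Hlam) as [K HK].
    specialize (HK x t ltac:(lra) ltac:(lra)).
    replace (t - t) with 0 in HK by ring. unfold pos, Rmax in HK. destruct Rle_dec; [|lra].
    rewrite Hx in HK. fold V in HK.
    assert (lam * t = (ue x t - V) / 2) by (unfold lam; field; lra).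
    assert (HV' : fr eps t + / 2 * t - / 2 * eps + lam * t + K * (0 * 0) = V + lam * t) by (unfold V; ring).
    lra. }
  rewrite Rabs_minus_sym. pose proof (Rle_abs (u x t - ue x t)). lra.
Qed.
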